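(* For every base $B$, term $\mathtt M$ and type $\kappa$ of qPCF: if $B\vdash\mathtt M:\kappa$ is derivable, then $\mathrm{Comp}(B,\mathtt M,\kappa)$ holds.
   Context: qPCF. Gates: $\mathcal U=\bigcup_k\mathcal U(k)$, $\mathtt U\in\mathcal U(k)$ acts on $k+1$ qubits and denotes a unitary $\mathbf U$; $\ddagger$ is a fixed total arity-preserving map on gate names. Raw terms: $\mathtt{M},\mathtt{N},\mathtt{P},\mathtt{Q},\mathtt{E}::=\mathtt{x}\mid\lambda\mathtt{x}^\sigma.\mathtt{M}\mid\mathtt{M}\mathtt{N}\mid\underline{n}\mid\mathtt{pred}\mid\mathtt{succ}\mid\mathtt{if}\mid\mathtt{Y}_\sigma\mid\mathtt{set}\mid\mathtt{get}\mid\mathtt{U}\mid{::}\mid{\parallel}\mid\mathtt{iter}\mid\mathtt{reverse}\mid\odot\mathtt{E}\mathtt{E}'\ (\odot\in\{+,*\})\mid\mathtt{size}\mid\mathtt{dMeas}$, with infix $::$, $\parallel$, $+$. Types $\sigma::=\mathsf{Nat}\mid\mathsf{Idx}\mid\mathsf{Circ}(\mathtt E)\mid\Pi\mathtt x^\sigma.\tau$; $\sigma\to\tau$ is a non-dependent $\Pi$. Bases $B$: finite variable-to-type assignments with distinct variables; $B\cup\{\mathtt x:\sigma\}$ presupposes $\mathtt x\notin\mathrm{dom}(B)$; substitution on a base acts on its types. $\mathrm{sC}(B,\mathsf{Nat})=\mathrm{sC}(B,\mathsf{Idx})=\emptyset$, $\mathrm{sC}(B,\mathsf{Circ}(\mathtt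 E))=\{B\vdash\mathtt E:\mathsf{Idx}\}$, $\mathrm{sC}(B,\Pi\mathtt x^\sigma.\tau)=\mathrm{sC}(B,\sigma)\cup\mathrm{sC}(B\cup\{\mathtt x:\sigma\},\tau)$, extended to sets by union; $\mathrm{WF}(B,S)$ means all typings in $\mathrm{sC}(B,S)$ are derivable. Typing rules: (P0) $\mathrm{WF}(B,\mathrm{codom}(B)\cup\{\sigma\})\Rightarrow B\cup\{\mathtt x:\sigma\}\vdash\mathtt x:\sigma$; (P1) $B\cup\{\mathtt x:\sigma\}\vdash\mathtt N:\tau\Rightarrow B\vdash\lambda\mathtt x^\sigma.\mathtt N:\Pi\mathtt x^\sigma.\tau$; (P2) $B\vdash\mathtt P:\Pi\mathtt x^\sigma.\tau$, $B\vdash\mathtt Q:\sigma\Rightarrow B\vdash\mathtt{PQ}:\tau[\mathtt Q/\mathtt x]$; given $\mathrm{WF}(B,\mathrm{codom}(B))$: $\mathtt{succ},\mathtt{pred}:\mathsf{Nat}\to\mathsf{Nat}$, $\mathtt{if}:\mathsf{Nat}\to\mathsf{Nat}\to\mathsf{Nat}\to\mathsf{Nat}$, $\mathtt{get},\mathtt{set}:\mathsf{Nat}\to\mathsf{Nat}\to\mathsf{Nat}$, $\underline n:\mathsf{Idx}$, $\mathtt U:\mathsf{Circ}(\underline k)$ for $\mathtt U\in\mathcal U(k)$; (P5') $B\vdash\mathtt E:\mathsf{Idx}\Rightarrow B\vdash\mathtt{if}:\mathsf{Nat}\to\mathsf{Circ}(\mathtt E)\to\mathsf{Circ}(\mathtt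 E)\to\mathsf{Circ}(\mathtt E)$; (P6) $\sigma=\tau_1\to\cdots\to\tau_n\to\gamma$, $\gamma\in\{\mathsf{Nat},\mathsf{Circ}(\mathtt E)\}$, $\mathrm{WF}(B,\mathrm{codom}(B)\cup\{\sigma\})\Rightarrow B\vdash\mathtt Y_\sigma:(\sigma\to\sigma)\to\sigma$; (I0) $B\vdash\mathtt M:\mathsf{Idx}\Rightarrow B\vdash\mathtt M:\mathsf{Nat}$; (I2) $B\vdash\mathtt E_0,\mathtt E_1:\mathsf{Idx}\Rightarrow B\vdash\odot\mathtt E_0\mathtt E_1:\mathsf{Idx}$; (I3) $B\vdash\mathtt M:\mathsf{Circ}(\mathtt E)\Rightarrow B\vdash\mathtt{size}\,\mathtt M:\mathsf{Idx}$; given $B\vdash\mathtt E,\mathtt E_0,\mathtt E_1:\mathsf{Idx}$: ${::}:\mathsf{Circ}(\mathtt E)\to\mathsf{Circ}(\mathtt E)\to\mathsf{Circ}(\mathtt E)$, ${\parallel}:\mathsf{Circ}(\mathtt E_0)\to\mathsf{Circ}(\mathtt E_1)\to\mathsf{Circ}(\mathtt E_0+\mathtt E_1+\underline1)$, $\mathtt{reverse}:\mathsf{Circ}(\mathtt E)\to\mathsf{Circ}(\mathtt E)$, $\mathtt{iter}:\Pi\mathtt x^{\mathsf{Idx}}.\mathsf{Circ}(\mathtt E_0)\to\mathsf{Circ}(\mathtt E_1)\to\mathsf{Circ}(\mathtt E_0+((\underline1+\mathtt E_1)*\mathtt x))$, $\mathtt{dMeas}:\mathsf{Nat}\to\mathsf{Circ}(\mathtt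 E)\to\mathsf{Nat}$. Types are identified modulo $\alpha$, $\beta$-convertibility of terms in types, and ring laws of $+,*$ with $0,1$. Evaluation $\mathtt M\Downarrow^\alpha\mathtt V$ ($\mathtt M$ closed of ground type, $0<\alpha\le1$, $\mathtt V$ a numeral or a term built from gate names with $::,\parallel$) is the big-step call-by-name relation: $\underline n\Downarrow^1\underline n$; $\mathtt{succ}$/$\mathtt{pred}$ evaluate their argument and add/subtract one; $(\lambda\mathtt x.\mathtt M)\mathtt N\vec{\mathtt P}\Downarrow^\alpha\mathtt V$ if $\mathtt M[\mathtt N/\mathtt x]\vec{\mathtt P}\Downarrow^\alpha\mathtt V$; $\mathtt{if}\,\mathtt M\mathtt L\mathtt R\Downarrow^{\alpha\alpha'}\mathtt V$ if $\mathtt M\Downarrow^\alpha\underline0,\mathtt L\Downarrow^{\alpha'}\mathtt V$ or $\mathtt M\Downarrow^\alpha\underline{n+1},\mathtt R\Downarrow^{\alpha'}\mathtt V$; $\mathtt Y\mathtt M\vec{\mathtt P}\Downarrow^\alpha\mathtt V$ if $\mathtt M(\mathtt Y\mathtt M)\vec{\mathtt P}\Downarrow^\alpha\mathtt V$; $\mathtt{size}\,\mathtt M\Downarrow^\alpha\underline n$ if $\vdash\mathtt M:\mathsf{Circ}(\mathtt E)$ and $\mathtt E\Downarrow^\alpha\underline n$; $\odot\mathtt E_0\mathtt E_1\Downarrow^{\alpha\alpha'}\underline{m\odot n}$ if $\mathtt E_0\Downarrow^\alpha\underline m,\mathtt E_1\Downarrow^{\alpha'}\underline n$; $\mathtt{get}\,\mathtt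 M\mathtt N$ / $\mathtt{set}\,\mathtt M\mathtt N$ evaluate both arguments to $\underline m,\underline n$ (probabilities multiplied) and return the $n$-th binary digit of $m$ / $m$ with that digit set to $1$; $\mathtt U\Downarrow^\alpha\mathtt U$; $::$, $\parallel$ evaluate components ($\mathtt M_0\parallel\mathtt M_1\Downarrow\mathtt C_1\parallel\mathtt C_0$); $\mathtt{reverse}$ replaces gates by their $\ddagger$-image and reverses sequential order; $\mathtt{iter}\,\mathtt E\mathtt M_0\mathtt M_1\Downarrow\mathtt C_1\parallel\cdots\parallel\mathtt C_1\parallel\mathtt C_0$ ($n$ copies, $\mathtt E\Downarrow\underline n$); $\mathtt{dMeas}\,\mathtt M\mathtt N\Downarrow^{\alpha\alpha'\alpha''}\underline n$ if $\mathtt M\Downarrow^\alpha\underline m$, $\mathtt N\Downarrow^{\alpha'}\mathtt C$, $\vdash\mathtt N:\mathsf{Circ}(\underline k)$ and $\underline n$ is a measurement outcome of the circuit $\mathtt C$ on input $m$ with probability $\alpha''$. Definition of Comp: $\mathrm{Comp}(B,\mathtt M,\sigma)$ holds iff $B\vdash\mathtt M:\sigma$ is derivable and one of: (i) $B=\emptyset$, $\sigma=\mathsf{Nat}$; (ii) $B=\emptyset$, $\sigma=\mathsf{Idx}$ and $\mathtt M\Downarrow^1\underline n$ for some $n$; (iii) $B=\emptyset$, $\sigma=\mathsf{Circ}(\mathtt E)$ and $\mathrm{Comp}(\emptyset,\mathtt E,\mathsf{Idx})$; (iv) $B=\emptyset$, $\sigma=\Pi\mathtt x^\mu.\tau$ and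 $\mathrm{Comp}(\emptyset,\mathtt{MN},\tau[\mathtt N/\mathtt x])$ for all $\mathtt N$ with $\mathrm{Comp}(\emptyset,\mathtt N,\mu)$; (v) $B=\{\mathtt x:\nu\}\cup B'$ and $\mathrm{Comp}(B'[\mathtt N/\mathtt x],\mathtt M[\mathtt N/\mathtt x],\sigma[\mathtt N/\mathtt x])$ for all $\mathtt N$ with $\mathrm{Comp}(\emptyset,\mathtt N,\nu)$. *)

(* Defs.v *)
From Stdlib Require Import Reals List Arith.
Import ListNotations.

(* Variables are de Bruijn indices; bound variables: lambda, Pi.        *)
Inductive tm (G : Type) : Type :=
| tVar  : nat -> tm G
| tLam  : ty G -> tm G -> tm G
| tApp  : tm G -> tm G -> tm G
| tNum  : nat -> tm G
| tPred : tm G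
| tSucc : tm G
| tIf   : tm G
| tY    : ty G -> tm G
| tSet  : tm G
| tGet  : tm G
| tGate : G -> tm G
| tCons : tm G
| tPar  : tm G
| tIter : tm G
| tRev  : tm G
| tPlus : tm G -> tm G -> tm G
| tMult : tm G -> tm G -> tm G
| tSize : tm G
| tDMeas : tm G
with ty (G : Type) : Type :=
| TNat  : ty G
| TIdx  : ty G
| TCirc : tm G -> ty G
| TPi   : ty G -> ty G -> ty G.

Arguments tVar {G}. Arguments tLam {G}. Arguments tApp {G}. Arguments tNum {G}.
Arguments tPred {G}. Arguments tSucc {G}. Arguments tIf {G}. Arguments tY {G}.
Arguments tSet {G}. Arguments tGet {G}. Arguments tGate {G}. Arguments tCons {G}.
Arguments tPar {G}. Arguments tIter {G}. Arguments tRev {G}. Arguments tPlus {G}.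
Arguments tMult {G}. Arguments tSize {G}. Arguments tDMeas {G}.
Arguments TNat {G}. Arguments TIdx {G}. Arguments TCirc {G}. Arguments TPi {G}.

Section QPCF.

Variable G : Type.

Fixpoint lift_tm (d c : nat) (t : tm G) {struct t} : tm G :=
  match t with
  | tVar k => if c <=? k then tVar (k + d) else tVar k
  | tLam s M => tLam (lift_ty d c s) (lift_tm d (S c) M)
  | tApp M N => tApp (lift_tm d c M) (lift_tm d c N)
  | tY s => tY (lift_ty d c s)
  | tPlus a b => tPlus (lift_tm d c a) (lift_tm d c b)
  | tMult a b => tMult (lift_tm d c a) (lift_tm d c b)
  | t => t
  end
with lift_ty (d c : nat) (s : ty G) {struct s} : ty G :=
  match s with
  | TCirc E => TCirc (lift_tm d c E)
  | TPi a b => TPi (lift_ty d c a) (lift_ty d (S c) b)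
  | s => s
  end.

Fixpoint subst_tm (j : nat) (N : tm G) (t : tm G) {struct t} : tm G :=
  match t with
  | tVar k => if k <? j then tVar k
              else if k =? j then lift_tm j 0 N else tVar (k - 1)
  | tLam s M => tLam (subst_ty j N s) (subst_tm (S j) N M)
  | tApp M P => tApp (subst_tm j N M) (subst_tm j N P)
  | tY s => tY (subst_ty j N s)
  | tPlus a b => tPlus (subst_tm j N a) (subst_tm j N b)
  | tMult a b => tMult (subst_tm j N a) (subst_tm j N b)
  | t => t
  end
with subst_ty (j : nat) (N : tm G) (s : ty G) {struct s} : ty G :=
  match s with
  | TCirc E => TCirc (subst_tm j N E)
  | TPi a b => TPi (subst_ty j N a) (subst_ty (S j) N b)
  | s => s
  end.

Definition arrow (s t : ty G) : ty G := TPi s (lift_ty 1 0 t).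

Inductive tmconv : tm G -> tm G -> Prop :=
| cv_refl : forall t, tmconv t t
| cv_sym : forall t u, tmconv t u -> tmconv u t
| cv_trans : forall t u v, tmconv t u -> tmconv u v -> tmconv t v
| cv_lam : forall s s' M M', tyconv s s' -> tmconv M M' -> tmconv (tLam s M) (tLam s' M')
| cv_app : forall M M' N N', tmconv M M' -> tmconv N N' -> tmconv (tApp M N) (tApp M' N')
| cv_Y : forall s s', tyconv s s' -> tmconv (tY s) (tY s')
| cv_plus : forall a a' b b', tmconv a a' -> tmconv b b' -> tmconv (tPlus a b) (tPlus a' b')
| cv_mult : forall a a' b b', tmconv a a' -> tmconv b b' -> tmconv (tMult a b) (tMult a' b')
| cv_beta : forall s M N, tmconv (tApp (tLam s M) N) (subst_tm 0 N M)
| cv_plusC : forall a b, tmconv (tPlus a b) (tPlus b a)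
| cv_plusA : forall a b c, tmconv (tPlus a (tPlus b c)) (tPlus (tPlus a b) c)
| cv_plus0 : forall a, tmconv (tPlus (tNum 0) a) a
| cv_multC : forall a b, tmconv (tMult a b) (tMult b a)
| cv_multA : forall a b c, tmconv (tMult a (tMult b c)) (tMult (tMult a b) c)
| cv_mult1 : forall a, tmconv (tMult (tNum 1) a) a
| cv_mult0 : forall a, tmconv (tMult (tNum 0) a) (tNum 0)
| cv_distr : forall a b c, tmconv (tMult a (tPlus b c)) (tPlus (tMult a b) (tMult a c))
| cv_num_plus : forall m n, tmconv (tPlus (tNum m) (tNum n)) (tNum (m + n))
| cv_num_mult : forall m n, tmconv (tMult (tNum m) (tNum n)) (tNum (m * n))
with tyconv : ty G -> ty G -> Prop :=
| cvt_refl : forall s, tyconv s s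
| cvt_sym : forall s t, tyconv s t -> tyconv t s
| cvt_trans : forall s t u, tyconv s t -> tyconv t u -> tyconv s u
| cvt_circ : forall E E', tmconv E E' -> tyconv (TCirc E) (TCirc E')
| cvt_pi : forall a a' b b', tyconv a a' -> tyconv b b' -> tyconv (TPi a b) (TPi a' b').

(* Bases.  A base is a list of types, one per variable; index i is the  *)
(* variable i, and every type in the list is written in the scope of    *)
(* the whole base (bases are unordered sets in the paper).              *)
(* [ins i s B] is  B ∪ {x:s}  with the fresh variable x at position i.  *)
Definition ins (i : nat) (s : ty G) (B : list (ty G)) : list (ty G) :=
  map (lift_ty 1 i) (firstn i B ++ s :: skipn i B).

Definition ext (B : list (ty G)) (s : ty G) : list (ty G) := ins 0 s B.

Inductive yshape : ty G -> Prop :=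
| ys_nat : yshape TNat
| ys_circ : forall E, yshape (TCirc E)
| ys_arrow : forall t r, yshape r -> yshape (arrow t r).

Variable arity : G -> nat.

(* typing  B |- M : sigma,  and well-formedness  wf B sigma  ( = WF(B,{sigma}) ,
   i.e. all typings in sC(B, sigma) are derivable) *)
Inductive typ : list (ty G) -> tm G -> ty G -> Prop :=
| T_var : forall B i s, i <= length B ->
    (forall t, In t B -> wf B t) -> wf B s ->
    typ (ins i s B) (tVar i) (lift_ty 1 i s)
| T_lam : forall B s N t, typ (ext B s) N t -> typ B (tLam s N) (TPi s t)
| T_app : forall B P Q s t, typ B P (TPi s t) -> typ B Q s ->
    typ B (tApp P Q) (subst_ty 0 Q t)
| T_succ : forall B, (forall t, In t B -> wf B t) -> typ B tSucc (arrow TNat TNat)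
| T_pred : forall B, (forall t, In t B -> wf B t) -> typ B tPred (arrow TNat TNat)
| T_if : forall B, (forall t, In t B -> wf B t) ->
    typ B tIf (arrow TNat (arrow TNat (arrow TNat TNat)))
| T_get : forall B, (forall t, In t B -> wf B t) ->
    typ B tGet (arrow TNat (arrow TNat TNat))
| T_set : forall B, (forall t, In t B -> wf B t) ->
    typ B tSet (arrow TNat (arrow TNat TNat))
| T_num : forall B n, (forall t, In t B -> wf B t) -> typ B (tNum n) TIdx
| T_gate : forall B g, (forall t, In t B -> wf B t) ->
    typ B (tGate g) (TCirc (tNum (arity g)))
| T_ifc : forall B E, typ B E TIdx ->
    typ B tIf (arrow TNat (arrow (TCirc E) (arrow (TCirc E) (TCirc E))))
| T_Y : forall B s s', (forall t, In t B -> wf B t) -> wf B s ->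
    tyconv s s' -> yshape s' ->
    typ B (tY s) (arrow (arrow s s) s)
| T_idx : forall B M, typ B M TIdx -> typ B M TNat
| T_plus : forall B a b, typ B a TIdx -> typ B b TIdx -> typ B (tPlus a b) TIdx
| T_mult : forall B a b, typ B a TIdx -> typ B b TIdx -> typ B (tMult a b) TIdx
| T_size : forall B M E, typ B M (TCirc E) -> typ B (tApp tSize M) TIdx
| T_cons : forall B E, typ B E TIdx ->
    typ B tCons (arrow (TCirc E) (arrow (TCirc E) (TCirc E)))
| T_par : forall B E0 E1, typ B E0 TIdx -> typ B E1 TIdx ->
    typ B tPar (arrow (TCirc E0) (arrow (TCirc E1)
                  (TCirc (tPlus (tPlus E0 E1) (tNum 1)))))
| T_rev : forall B E, typ B E TIdx -> typ B tRev (arrow (TCirc E) (TCirc E))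
| T_iter : forall B E0 E1, typ B E0 TIdx -> typ B E1 TIdx ->
    typ B tIter
      (TPi TIdx (arrow (TCirc (lift_tm 1 0 E0))
                   (arrow (TCirc (lift_tm 1 0 E1))
                      (TCirc (tPlus (lift_tm 1 0 E0)
                                (tMult (tPlus (tNum 1) (lift_tm 1 0 E1)) (tVar 0)))))))
| T_dmeas : forall B E, typ B E TIdx ->
    typ B tDMeas (arrow TNat (arrow (TCirc E) TNat))
| T_conv : forall B M s t, typ B M s -> tyconv s t -> wf B t -> typ B M t
with wf : list (ty G) -> ty G -> Prop :=
| wf_nat : forall B, wf B TNat
| wf_idx : forall B, wf B TIdx
| wf_circ : forall B E, typ B E TIdx -> wf B (TCirc E)
| wf_pi : forall B s t, wf B s -> wf (ext B s) t -> wf B (TPi s t).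

Variable dagger : G -> G.
Variable meas : tm G -> nat -> nat -> nat -> R.
(* meas C k m n : probability that n is the measurement outcome of the
   circuit value C : Circ(k) on input m *)

Definition apps (M : tm G) (Ps : list (tm G)) : tm G := fold_left (@tApp G) Ps M.

Fixpoint crev (C : tm G) : tm G :=
  match C with
  | tGate g => tGate (dagger g)
  | tApp (tApp tCons C0) C1 => tApp (tApp tCons (crev C1)) (crev C0)
  | tApp (tApp tPar C0) C1 => tApp (tApp tPar (crev C0)) (crev C1)
  | C => C
  end.

Fixpoint iterc (n : nat) (C1 C0 : tm G) : tm G :=
  match n with
  | 0 => C0
  | S n => tApp (tApp tPar C1) (iterc n C1 C0)
  end.

Inductive eval : tm G -> R -> tm G -> Prop :=
| E_num : forall n, eval (tNum n) 1%R (tNum n)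
| E_succ : forall M a n, eval M a (tNum n) -> eval (tApp tSucc M) a (tNum (S n))
| E_pred : forall M a n, eval M a (tNum n) -> eval (tApp tPred M) a (tNum (Nat.pred n))
| E_beta : forall s M N Ps a V,
    eval (apps (subst_tm 0 N M) Ps) a V -> eval (apps (tApp (tLam s M) N) Ps) a V
| E_if0 : forall M L Rt a a' V, eval M a (tNum 0) -> eval L a' V ->
    eval (tApp (tApp (tApp tIf M) L) Rt) (a * a')%R V
| E_ifS : forall M L Rt n a a' V, eval M a (tNum (S n)) -> eval Rt a' V ->
    eval (tApp (tApp (tApp tIf M) L) Rt) (a * a')%R V
| E_Y : forall s M Ps a V,
    eval (apps (tApp M (tApp (tY s) M)) Ps) a V -> eval (apps (tApp (tY s) M) Ps) a V
| E_size : forall M E a n, typ [] M (TCirc E) -> eval E a (tNum n) ->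
    eval (tApp tSize M) a (tNum n)
| E_plus : forall E0 E1 a a' m n, eval E0 a (tNum m) -> eval E1 a' (tNum n) ->
    eval (tPlus E0 E1) (a * a')%R (tNum (m + n))
| E_mult : forall E0 E1 a a' m n, eval E0 a (tNum m) -> eval E1 a' (tNum n) ->
    eval (tMult E0 E1) (a * a')%R (tNum (m * n))
| E_get : forall M N a a' m n, eval M a (tNum m) -> eval N a' (tNum n) ->
    eval (tApp (tApp tGet M) N) (a * a')%R (tNum (if Nat.testbit m n then 1 else 0))
| E_set : forall M N a a' m n, eval M a (tNum m) -> eval N a' (tNum n) ->
    eval (tApp (tApp tSet M) N) (a * a')%R (tNum (Nat.setbit m n))
| E_gate : forall g, eval (tGate g) 1%R (tGate g)
| E_cons : forall M0 M1 a a' C0 C1, eval M0 a C0 -> eval M1 a' C1 ->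
    eval (tApp (tApp tCons M0) M1) (a * a')%R (tApp (tApp tCons C0) C1)
| E_par : forall M0 M1 a a' C0 C1, eval M0 a C0 -> eval M1 a' C1 ->
    eval (tApp (tApp tPar M0) M1) (a * a')%R (tApp (tApp tPar C1) C0)
| E_rev : forall M a C, eval M a C -> eval (tApp tRev M) a (crev C)
| E_iter : forall E M0 M1 a a' a'' n C0 C1,
    eval E a (tNum n) -> eval M0 a' C0 -> eval M1 a'' C1 ->
    eval (tApp (tApp (tApp tIter E) M0) M1) (a * a' * a'')%R (iterc n C1 C0)
| E_dmeas : forall M N a a' p m k n C,
    eval M a (tNum m) -> eval N a' C -> typ [] N (TCirc (tNum k)) ->
    (0 < p)%R -> meas C k m n = p ->
    eval (tApp (tApp tDMeas M) N) (a * a' * p)%R (tNum n).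

(* size of a type (number of Pi-nestings, Circ counts 2); invariant
   under substitution, used as fuel for the closed case *)
Fixpoint tsize (s : ty G) : nat :=
  match s with
  | TNat => 1
  | TIdx => 1
  | TCirc _ => 2
  | TPi a b => S (Nat.max (tsize a) (tsize b))
  end.

(* clauses (i)-(iv): Comp(∅, M, sigma) *)
Fixpoint compc (f : nat) (s : ty G) (M : tm G) {struct f} : Prop :=
  match f with
  | 0 => False
  | S f =>
    typ [] M s /\
    match s with
    | TNat => True
    | TIdx => exists n, eval M 1%R (tNum n)
    | TCirc E => compc f TIdx E
    | TPi mu t => forall N, compc f mu N -> compc f (subst_ty 0 N t) (tApp M N)
    end
  end.

Definition CompClosed (s : ty G) (M : tm G) : Prop := compc (tsize s) s M.

Definition remove_at (i : nat) (B : list (ty G)) : list (ty G) :=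
  firstn i B ++ skipn (S i) B.

(* clause (v): for every x:nu in B (B = {x:nu} ∪ B') and every N with
   Comp(∅,N,nu):  Comp(B'[N/x], M[N/x], sigma[N/x]) *)
Fixpoint comp_aux (k : nat) (B : list (ty G)) (M : tm G) (s : ty G) : Prop :=
  match k with
  | 0 => B = [] /\ CompClosed s M
  | S k =>
    typ B M s /\
    forall i, i < length B -> forall N, CompClosed (nth i B TNat) N ->
      comp_aux k (map (subst_ty i N) (remove_at i B)) (subst_tm i N M) (subst_ty i N s)
  end.

Definition Comp (B : list (ty G)) (M : tm G) (s : ty G) : Prop :=
  comp_aux (length B) B M s.

End QPCF.

(* Main.v *)
Require Import Defs.
From Stdlib Require Import Reals List Arith Lia.
Import ListNotations.

Module P1.

Scheme tm_mut := Induction for tm Sort Prop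
with ty_mut := Induction for ty Sort Prop.
Combined Scheme tmty_mut from tm_mut, ty_mut.

Section Syn.
Variable G : Type.
Local Notation tm := (tm G).
Local Notation ty := (ty G).

Definition upt (f : nat -> tm) (k : nat) : tm :=
  match k with 0 => tVar 0 | S k => lift_tm G 1 0 (f k) end.

Fixpoint psub (f : nat -> tm) (t : tm) {struct t} : tm :=
  match t with
  | tVar k => f k
  | tLam s M => tLam (psubT f s) (psub (upt f) M)
  | tApp M N => tApp (psub f M) (psub f N)
  | tY s => tY (psubT f s)
  | tPlus a b => tPlus (psub f a) (psub f b)
  | tMult a b => tMult (psub f a) (psub f b)
  | t => t
  end
with psubT (f : nat -> tm) (s : ty) {struct s} : ty :=
  match s with
  | TCirc E => TCirc (psub f E)
  | TPi a b => TPi (psubT f a) (psubT (upt f) b)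
  | s => s
  end.

Definition upr (r : nat -> nat) (k : nat) : nat :=
  match k with 0 => 0 | S k => S (r k) end.

Lemma up_ext f g : (forall k, f k = g k) -> forall k, upt f k = upt g k.
Proof. intros H [|k]; simpl; [reflexivity| now rewrite H]. Qed.

Lemma psub_ext_all :
  (forall t f g, (forall k, f k = g k) -> psub f t = psub g t) /\
  (forall s f g, (forall k, f k = g k) -> psubT f s = psubT g s).
Proof.
  apply tmty_mut; intros; simpl; f_equal; eauto using up_ext.
Qed.
Lemma psub_ext t f g : (forall k, f k = g k) -> psub f t = psub g t.
Proof. apply psub_ext_all. Qed.
Lemma psubT_ext s f g : (forall k, f k = g k) -> psubT f s = psubT g s.
Proof. apply psub_ext_all. Qed.

Definition liftf (d c : nat) (k : nat) : tm :=
  tVar (if c <=? k then k + d else k).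

Lemma up_liftf d c k : upt (liftf d c) k = liftf d (S c) k.
Proof.
  destruct k; simpl; unfold liftf; simpl. reflexivity.
  destruct (c <=? k); simpl; f_equal; lia.
Qed.

Lemma lift_psub_all :
  (forall t d c, lift_tm G d c t = psub (liftf d c) t) /\
  (forall s d c, lift_ty G d c s = psubT (liftf d c) s).
Proof.
  apply tmty_mut; intros; simpl; try reflexivity;
  try (f_equal; eauto; fail).
  - unfold liftf. destruct (c <=? n); reflexivity.
  - rewrite H, H0. f_equal. apply psub_ext. intros; now rewrite up_liftf.
  - rewrite H, H0. f_equal. apply psubT_ext. intros; now rewrite up_liftf.
Qed.
Lemma lift_psub t d c : lift_tm G d c t = psub (liftf d c) t.
Proof. apply lift_psub_all. Qed.
Lemma liftT_psub s d c : lift_ty G d c s = psubT (liftf d c) s.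
Proof. apply lift_psub_all. Qed.

Definition ren (r : nat -> nat) (k : nat) : tm := tVar (r k).

Lemma up_ren r k : upt (ren r) k = ren (upr r) k.
Proof. destruct k; simpl; [reflexivity|]. unfold ren. simpl. f_equal; lia. Qed.

Lemma lift1_ren t : lift_tm G 1 0 t = psub (ren S) t.
Proof. rewrite lift_psub. apply psub_ext. intro k. unfold liftf, ren. simpl. f_equal; lia. Qed.
Lemma lift1T_ren s : lift_ty G 1 0 s = psubT (ren S) s.
Proof. rewrite liftT_psub. apply psubT_ext. intro k. unfold liftf, ren. simpl. f_equal; lia. Qed.

Lemma ren_ren_all :
  (forall t r1 r2, psub (ren r1) (psub (ren r2) t) = psub (ren (fun k => r1 (r2 k))) t) /\
  (forall s r1 r2, psubT (ren r1) (psubT (ren r2) s) = psubT (ren (fun k => r1 (r2 k))) s).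
Proof.
  apply tmty_mut; intros; simpl; try reflexivity; try (f_equal; eauto; fail).
  - f_equal; auto.
    rewrite (psub_ext _ (upt (ren r2)) (ren (upr r2))) by apply up_ren.
    rewrite (psub_ext _ (upt (ren r1)) (ren (upr r1))) by apply up_ren.
    rewrite H0. apply psub_ext. intro k; rewrite up_ren; destruct k; reflexivity.
  - f_equal; auto.
    rewrite (psubT_ext _ (upt (ren r2)) (ren (upr r2))) by apply up_ren.
    rewrite (psubT_ext _ (upt (ren r1)) (ren (upr r1))) by apply up_ren.
    rewrite H0. apply psubT_ext. intro k; rewrite up_ren; destruct k; reflexivity.
Qed.

Lemma sub_ren_all :
  (forall t f r, psub f (psub (ren r) t) = psub (fun k => f (r k)) t) /\
  (forall s f r, psubT f (psubT (ren r) s) = psubT (fun k => f (r k)) s).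
Proof.
  apply tmty_mut; intros; simpl; try reflexivity; try (f_equal; eauto; fail).
  - f_equal; auto.
    rewrite (psub_ext _ (upt (ren r)) (ren (upr r))) by apply up_ren.
    rewrite H0. apply psub_ext. intros [|k]; reflexivity.
  - f_equal; auto.
    rewrite (psubT_ext _ (upt (ren r)) (ren (upr r))) by apply up_ren.
    rewrite H0. apply psubT_ext. intros [|k]; reflexivity.
Qed.

Lemma ren_sub_all :
  (forall t f r, psub (ren r) (psub f t) = psub (fun k => psub (ren r) (f k)) t) /\
  (forall s f r, psubT (ren r) (psubT f s) = psubT (fun k => psub (ren r) (f k)) s).
Proof.
  apply tmty_mut; intros; simpl; try reflexivity; try (f_equal; eauto; fail).
  - f_equal; auto.
    rewrite (psub_ext _ (upt (ren r)) (ren (upr r))) by apply up_ren.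
    rewrite H0. apply psub_ext. intros [|k]; simpl. reflexivity.
    rewrite !lift1_ren. rewrite (proj1 ren_ren_all), (proj1 ren_ren_all). reflexivity.
  - f_equal; auto.
    rewrite (psubT_ext _ (upt (ren r)) (ren (upr r))) by apply up_ren.
    rewrite H0. apply psubT_ext. intros [|k]; simpl. reflexivity.
    rewrite !lift1_ren. rewrite (proj1 ren_ren_all), (proj1 ren_ren_all). reflexivity.
Qed.

Lemma up_comp f g k : psub (upt f) (upt g k) = upt (fun j => psub f (g j)) k.
Proof.
  destruct k; simpl; [reflexivity|].
  rewrite !lift1_ren. rewrite (proj1 sub_ren_all), (proj1 ren_sub_all).
  apply psub_ext. intro j. simpl. rewrite lift1_ren. reflexivity.
Qed.

Lemma sub_sub_all :
  (forall t f g, psub f (psub g t) = psub (fun k => psub f (g k)) t) /\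
  (forall s f g, psubT f (psubT g s) = psubT (fun k => psub f (g k)) s).
Proof.
  apply tmty_mut; intros; simpl; try reflexivity; try (f_equal; eauto; fail).
  - f_equal; auto. rewrite H0. apply psub_ext. apply up_comp.
  - f_equal; auto. rewrite H0. apply psubT_ext. apply up_comp.
Qed.
Lemma sub_sub t f g : psub f (psub g t) = psub (fun k => psub f (g k)) t.
Proof. apply sub_sub_all. Qed.
Lemma subT_sub s f g : psubT f (psubT g s) = psubT (fun k => psub f (g k)) s.
Proof. apply sub_sub_all. Qed.

Lemma psub_id_all :
  (forall t, psub (@tVar G) t = t) /\ (forall s, psubT (@tVar G) s = s).
Proof.
  apply tmty_mut; intros; simpl; try reflexivity; try (f_equal; eauto; fail).
  - f_equal; auto. rewrite <- H0 at 2. apply psub_ext. intros [|k]; simpl; try reflexivity.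
    unfold liftf. simpl. f_equal. lia.
  - f_equal; auto. rewrite <- H0 at 2. apply psubT_ext. intros [|k]; simpl; try reflexivity.
    unfold liftf. simpl. f_equal. lia.
Qed.
Lemma psub_id t : psub (@tVar G) t = t. Proof. apply psub_id_all. Qed.
Lemma psubT_id s : psubT (@tVar G) s = s. Proof. apply psub_id_all. Qed.

Definition substf (j : nat) (N : tm) (k : nat) : tm :=
  if k <? j then tVar k else if k =? j then lift_tm G j 0 N else tVar (k - 1).

Lemma up_substf j N k : upt (substf j N) k = substf (S j) N k.
Proof.
  destruct k; simpl; unfold substf; simpl. destruct j; reflexivity.
  change (S k <? S j) with (k <? j). change (S k =? S j) with (k =? j).
  destruct (Nat.ltb_spec k j); simpl. f_equal; lia.
  destruct (Nat.eqb_spec k j); simpl.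
  - rewrite !lift_psub, sub_sub. apply psub_ext. intro i. unfold liftf. simpl.
    f_equal. lia.
  - f_equal. lia.
Qed.

Lemma subst_psub_all :
  (forall t j N, subst_tm G j N t = psub (substf j N) t) /\
  (forall s j N, subst_ty G j N s = psubT (substf j N) s).
Proof.
  apply tmty_mut; intros; simpl; try reflexivity; try (f_equal; eauto; fail).
  - rewrite H, H0. f_equal. apply psub_ext. intros; now rewrite up_substf.
  - rewrite H, H0. f_equal. apply psubT_ext. intros; now rewrite up_substf.
Qed.
Lemma subst_psub t j N : subst_tm G j N t = psub (substf j N) t.
Proof. apply subst_psub_all. Qed.
Lemma substT_psub s j N : subst_ty G j N s = psubT (substf j N) s.
Proof. apply subst_psub_all. Qed.

End Syn.

End P1.
Import P1.

Module P2.

Section Syn2.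
Variable G : Type.
Local Notation tm := (tm G).
Local Notation ty := (ty G).
Local Notation psub := (psub G).
Local Notation psubT := (psubT G).
Local Notation upt := (upt G).

Lemma psub_up_lift f t : psub (upt f) (lift_tm G 1 0 t) = lift_tm G 1 0 (psub f t).
Proof.
  rewrite !lift1_ren, (proj1 (sub_ren_all G)), (proj1 (ren_sub_all G)).
  apply psub_ext. intro k. simpl. now rewrite lift1_ren.
Qed.
Lemma psubT_up_lift f t : psubT (upt f) (lift_ty G 1 0 t) = lift_ty G 1 0 (psubT f t).
Proof.
  rewrite !lift1T_ren, (proj2 (sub_ren_all G)), (proj2 (ren_sub_all G)).
  apply psubT_ext. intro k. simpl. now rewrite lift1_ren.
Qed.

Lemma lift_psubT_gen s d c f :
  psubT f (lift_ty G d c s) = psubT (fun k => f (if c <=? k then k + d else k)) s.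
Proof. rewrite liftT_psub, subT_sub. apply psubT_ext. intro k. unfold liftf. reflexivity. Qed.
Lemma lift_psub_gen s d c f :
  psub f (lift_tm G d c s) = psub (fun k => f (if c <=? k then k + d else k)) s.
Proof. rewrite lift_psub, sub_sub. apply psub_ext. intro k. unfold liftf. reflexivity. Qed.

Lemma subst_lift_cancel t j A : subst_tm G j A (lift_tm G 1 j t) = t.
Proof.
  rewrite subst_psub, lift_psub_gen. rewrite <- (psub_id G t) at 2. apply psub_ext.
  intro k. unfold substf. destruct (Nat.leb_spec j k).
  - destruct (Nat.ltb_spec (k+1) j); [lia|]. destruct (Nat.eqb_spec (k+1) j); [lia|]. f_equal; lia.
  - destruct (Nat.ltb_spec k j); [reflexivity|lia].
Qed.
Lemma substT_lift_cancel t j A : subst_ty G j A (lift_ty G 1 j t) = t.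
Proof.
  rewrite substT_psub, lift_psubT_gen. rewrite <- (psubT_id G t) at 2. apply psubT_ext.
  intro k. unfold substf. destruct (Nat.leb_spec j k).
  - destruct (Nat.ltb_spec (k+1) j); [lia|]. destruct (Nat.eqb_spec (k+1) j); [lia|]. f_equal; lia.
  - destruct (Nat.ltb_spec k j); [reflexivity|lia].
Qed.

Lemma lift0 t c : lift_tm G 0 c t = t.
Proof.
  rewrite lift_psub. rewrite <- (psub_id G t) at 2. apply psub_ext. intro k.
  unfold liftf. destruct (c <=? k); f_equal; lia.
Qed.

Lemma subst0_comm_pt f Q k :
  psub f (substf G 0 Q k) = psub (substf G 0 (psub f Q)) (upt f k).
Proof.
  destruct k; simpl.
  - unfold substf; simpl. now rewrite !lift0.
  - rewrite <- subst_psub. rewrite subst_lift_cancel. unfold substf; simpl. f_equal; lia.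
Qed.

Lemma psub_subst0 f Q t :
  psub f (subst_tm G 0 Q t) = subst_tm G 0 (psub f Q) (psub (upt f) t).
Proof.
  rewrite !subst_psub, !sub_sub. apply psub_ext. apply subst0_comm_pt.
Qed.
Lemma psubT_subst0 f Q t :
  psubT f (subst_ty G 0 Q t) = subst_ty G 0 (psub f Q) (psubT (upt f) t).
Proof.
  rewrite !substT_psub, !subT_sub. apply psubT_ext. apply subst0_comm_pt.
Qed.

Lemma psub_arrow f a b : psubT f (arrow G a b) = arrow G (psubT f a) (psubT f b).
Proof. unfold arrow. simpl. now rewrite psubT_up_lift. Qed.

Fixpoint cl (n : nat) (t : tm) {struct t} : Prop :=
  match t with
  | tVar k => k < n
  | tLam s M => clT n s /\ cl (S n) M
  | tApp M N => cl n M /\ cl n N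
  | tY s => clT n s
  | tPlus a b => cl n a /\ cl n b
  | tMult a b => cl n a /\ cl n b
  | _ => True
  end
with clT (n : nat) (s : ty) {struct s} : Prop :=
  match s with
  | TCirc E => cl n E
  | TPi a b => clT n a /\ clT (S n) b
  | _ => True
  end.

Lemma cl_ext_all :
  (forall t n f g, cl n t -> (forall k, k < n -> f k = g k) -> psub f t = psub g t) /\
  (forall s n f g, clT n s -> (forall k, k < n -> f k = g k) -> psubT f s = psubT g s).
Proof.
  apply tmty_mut; intros; simpl in *; try reflexivity;
  repeat match goal with H : _ /\ _ |- _ => destruct H end;
  try (f_equal; eauto; fail).
  - f_equal; eauto. eapply H0; eauto. intros [|k] Hk; simpl; auto. f_equal. apply H2. lia.
  - f_equal; eauto. eapply H0; eauto. intros [|k] Hk; simpl; auto. f_equal. apply H2. lia.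
Qed.
Lemma cl_ext t n f g : cl n t -> (forall k, k < n -> f k = g k) -> psub f t = psub g t.
Proof. apply cl_ext_all. Qed.
Lemma clT_ext s n f g : clT n s -> (forall k, k < n -> f k = g k) -> psubT f s = psubT g s.
Proof. apply cl_ext_all. Qed.

Lemma cl0_psub t f : cl 0 t -> psub f t = t.
Proof. intro H. rewrite <- (psub_id G t) at 2. eapply cl_ext; eauto. intros; lia. Qed.
Lemma clT0_psub t f : clT 0 t -> psubT f t = t.
Proof. intro H. rewrite <- (psubT_id G t) at 2. eapply clT_ext; eauto. intros; lia. Qed.
Lemma cl0_lift t d c : cl 0 t -> lift_tm G d c t = t.
Proof. intro. rewrite lift_psub. now apply cl0_psub. Qed.
Lemma clT0_lift t d c : clT 0 t -> lift_ty G d c t = t.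
Proof. intro. rewrite liftT_psub. now apply clT0_psub. Qed.

End Syn2.

End P2.
Import P2.

Module P3.

Scheme tmconv_mut := Induction for tmconv Sort Prop
with tyconv_mut := Induction for tyconv Sort Prop.
Combined Scheme conv_mut from tmconv_mut, tyconv_mut.

Section Conv.
Variable G : Type.
Local Notation tm := (tm G).
Local Notation ty := (ty G).
Local Notation psub := (psub G).
Local Notation psubT := (psubT G).
Local Notation upt := (upt G).

Lemma conv_psub_all :
  (forall t u, tmconv G t u -> forall f, tmconv G (psub f t) (psub f u)) /\
  (forall s u, tyconv G s u -> forall f, tyconv G (psubT f s) (psubT f u)).
Proof.
  apply conv_mut; intros; simpl; try (econstructor; eauto; fail).
  - rewrite psub_subst0. apply cv_beta.
Qed.
Lemma tmconv_psub t u f : tmconv G t u -> tmconv G (psub f t) (psub f u).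
Proof. intro H. now apply conv_psub_all. Qed.
Lemma tyconv_psub t u f : tyconv G t u -> tyconv G (psubT f t) (psubT f u).
Proof. intro H. now apply conv_psub_all. Qed.

Definition shrel (s t : ty) : Prop :=
  match s, t with
  | TNat, TNat => True
  | TIdx, TIdx => True
  | TCirc E, TCirc E' => tmconv G E E'
  | TPi a b, TPi a' b' => tyconv G a a' /\ tyconv G b b'
  | _, _ => False
  end.

Lemma tyconv_shrel s t : tyconv G s t -> shrel s t.
Proof.
  induction 1; simpl.
  - destruct s; simpl; auto; constructor; constructor.
  - destruct s, t; simpl in *; auto. now apply cv_sym. destruct IHtyconv; split; now apply cvt_sym.
  - destruct s, t, u; simpl in *; try tauto. eapply cv_trans; eauto.
    destruct IHtyconv1, IHtyconv2; split; eapply cvt_trans; eauto.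
  - auto.
  - auto.
Qed.

Lemma tyconv_pi_inv a b X : tyconv G (TPi a b) X ->
  exists a' b', X = TPi a' b' /\ tyconv G a a' /\ tyconv G b b'.
Proof. intro H. apply tyconv_shrel in H. destruct X; simpl in H; try tauto. eauto. Qed.
Lemma tyconv_idx_inv X : tyconv G X TIdx -> X = TIdx.
Proof. intro H. apply tyconv_shrel in H. destruct X; simpl in H; tauto. Qed.

Fixpoint leafIdx (s : ty) : Prop :=
  match s with
  | TIdx => True
  | TPi _ b => leafIdx b
  | _ => False
  end.

Lemma leafIdx_psub s : forall f, leafIdx (psubT f s) <-> leafIdx s.
Proof. induction s; intros; simpl; try tauto. apply IHs2. Qed.

Lemma leafIdx_conv s u : tyconv G s u -> (leafIdx s <-> leafIdx u).
Proof.
  revert u. induction s; intros u H; apply tyconv_shrel in H; destruct u; simpl in *; try tauto.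
  destruct H. apply IHs2; auto.
Qed.

Lemma yshape_noleaf s : yshape G s -> ~ leafIdx s.
Proof.
  induction 1; simpl; auto. unfold arrow. simpl. rewrite lift1T_ren.
  rewrite leafIdx_psub. auto.
Qed.

Lemma yshape_psub s f : yshape G s -> yshape G (psubT f s).
Proof.
  intro H. revert f. induction H; intros.
  - simpl; constructor.
  - simpl; constructor.
  - rewrite psub_arrow. constructor. auto.
Qed.

Fixpoint tsz (s : ty) : nat :=
  match s with
  | TNat => 1 | TIdx => 1 | TCirc _ => 2
  | TPi a b => S (Nat.max (tsz a) (tsz b)) end.

Lemma tsize_eq s : tsize G s = tsz s.
Proof. induction s; simpl; auto. Qed.

Lemma tsz_psub s : forall f, tsz (psubT f s) = tsz s.
Proof. induction s; intros; simpl; auto. Qed.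

Lemma tsz_conv s u : tyconv G s u -> tsz s = tsz u.
Proof.
  revert u. induction s; intros u H; apply tyconv_shrel in H; destruct u; simpl in *; try tauto.
  destruct H. f_equal. f_equal; auto.
Qed.

End Conv.

End P3.
Import P3.

Module P4.

Scheme typ_mut := Minimality for typ Sort Prop
with wf_mut := Minimality for wf Sort Prop.

Section Cl.
Variable G : Type.
Variable arity : G -> nat.
Local Notation tm := (tm G).
Local Notation ty := (ty G).
Local Notation psub := (psub G).
Local Notation psubT := (psubT G).
Local Notation upt := (upt G).
Local Notation cl := (cl G).
Local Notation clT := (clT G).

Lemma length_ins i s (B : list ty) : length (ins G i s B) = S (length B).
Proof.
  unfold ins. rewrite length_map, length_app. simpl.
  rewrite <- (firstn_skipn i B) at 3. rewrite length_app. lia.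
Qed.

Lemma in_firstn_skipn {A} (x : A) i l : In x (firstn i l) \/ In x (skipn i l) -> In x l.
Proof. intro H. rewrite <- (firstn_skipn i l). apply in_or_app. tauto. Qed.

Lemma in_ins x i s (B : list ty) : In x (ins G i s B) ->
  exists y, x = lift_ty G 1 i y /\ (y = s \/ In y B).
Proof.
  unfold ins. intro H. apply in_map_iff in H. destruct H as [y [<- Hy]].
  exists y. split; auto. apply in_app_or in Hy. destruct Hy as [Hy|[Hy|Hy]]; auto;
  right; apply (in_firstn_skipn y i); auto.
Qed.

Lemma cl_ren_all :
  (forall t n m r, cl n t -> (forall k, k < n -> r k < m) -> cl m (psub (ren G r) t)) /\
  (forall t n m r, clT n t -> (forall k, k < n -> r k < m) -> clT m (psubT (ren G r) t)).
Proof.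
  apply tmty_mut; intros; simpl in *; unfold ren in *; eauto;
  repeat match goal with H : _ /\ _ |- _ => destruct H end; try (split; eauto; fail).
  - split; eauto. rewrite (psub_ext G _ _ (ren G (upr r))) by apply up_ren.
    eapply H0; eauto. intros [|k] Hk; simpl; try lia. specialize (H2 k). lia.
  - split; eauto. rewrite (psubT_ext G _ _ (ren G (upr r))) by apply up_ren.
    eapply H0; eauto. intros [|k] Hk; simpl; try lia. specialize (H2 k). lia.
Qed.

Lemma cl_psub_all :
  (forall t n m f, cl n t -> (forall k, k < n -> cl m (f k)) -> cl m (psub f t)) /\
  (forall t n m f, clT n t -> (forall k, k < n -> cl m (f k)) -> clT m (psubT f t)).
Proof.
  assert (Hup : forall n m f, (forall k, k < n -> cl m (f k)) ->
     forall k, k < S n -> cl (S m) (upt f k)).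
  { intros n m f H [|k] Hk; simpl. lia.
    rewrite lift1_ren. eapply cl_ren_all. apply H. lia. intros; lia. }
  apply tmty_mut; intros; simpl in *; eauto;
  repeat match goal with H : _ /\ _ |- _ => destruct H end; try (split; eauto; fail).
Qed.

Lemma cl_unren_all :
  (forall t n m r, cl m (psub (ren G r) t) -> (forall k, r k < m -> k < n) -> cl n t) /\
  (forall t n m r, clT m (psubT (ren G r) t) -> (forall k, r k < m -> k < n) -> clT n t).
Proof.
  apply tmty_mut; intros; simpl in *; unfold ren in *; eauto;
  repeat match goal with H : _ /\ _ |- _ => destruct H end; try (split; eauto; fail).
  - split; eauto. rewrite (psub_ext G _ _ (ren G (upr r))) in H3 by apply up_ren.
    eapply H0; eauto. intros [|k] Hk; simpl in *; try lia. specialize (H2 k). lia.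
  - split; eauto. rewrite (psubT_ext G _ _ (ren G (upr r))) in H3 by apply up_ren.
    eapply H0; eauto. intros [|k] Hk; simpl in *; try lia. specialize (H2 k). lia.
Qed.

Lemma clT_lift n i t : clT n t -> clT (S n) (lift_ty G 1 i t).
Proof.
  intro H. rewrite liftT_psub. eapply cl_psub_all; eauto. intros k Hk. unfold liftf.
  simpl. destruct (i <=? k); lia.
Qed.
Lemma cl_lift n i t : cl n t -> cl (S n) (lift_tm G 1 i t).
Proof.
  intro H. rewrite lift_psub. eapply cl_psub_all; eauto. intros k Hk. unfold liftf.
  simpl. destruct (i <=? k); lia.
Qed.
Lemma clT_unlift n t : clT (S n) (lift_ty G 1 0 t) -> clT n t.
Proof. rewrite lift1T_ren. intro H. eapply cl_unren_all; eauto. intros; lia. Qed.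

Lemma clT_arrow n a b : clT n a -> clT n b -> clT n (arrow G a b).
Proof. intros. unfold arrow. simpl. split; auto. now apply clT_lift. Qed.

Lemma clT_subst0 n Q t : cl n Q -> clT (S n) t -> clT n (subst_ty G 0 Q t).
Proof.
  intros. rewrite substT_psub. eapply cl_psub_all; eauto. intros [|k] Hk; unfold substf; simpl.
  now rewrite lift0. lia.
Qed.

Lemma length_ext (B : list ty) s : length (ext G B s) = S (length B).
Proof. apply length_ins. Qed.

Lemma in_ext_inv (B : list ty) s t : In t B -> In (lift_ty G 1 0 t) (ext G B s).
Proof. intro H. unfold ext, ins. simpl. right. now apply in_map. Qed.

Definition clB (B : list ty) := forall t, In t B -> clT (length B) t.

Lemma in_ext_hd (B : list ty) s : In (lift_ty G 1 0 s) (ext G B s).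
Proof. unfold ext, ins. simpl. now left. Qed.

Ltac cltac :=
  repeat match goal with H : _ /\ _ |- _ => destruct H end;
  rewrite ?length_ext in *; rewrite ?length_ins;
  repeat match goal with
  | H : forall t, In t (ext G ?B ?s) -> _ |- _ =>
      pose proof (H _ (in_ext_hd B s));
      assert (forall t, In t B -> clT (S (length B)) (lift_ty G 1 0 t))
        by (intros; apply H; now apply in_ext_inv);
      clear H
  end;
  simpl in *; repeat match goal with H : _ /\ _ |- _ => destruct H end;
  simpl; repeat split; try lia; eauto 8 using clT_lift, cl_lift, clT_unlift, clT_subst0, clT_arrow;
  try (intros t Ht; apply in_ins in Ht; destruct Ht as [y [-> [->|Hy]]]; apply clT_lift; auto).

Lemma typ_closed_all :
  (forall B M s, typ G arity B M s -> cl (length B) M /\ clT (length B) s /\ clB B) /\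
  (forall B s, wf G arity B s -> clT (length B) s).
Proof.
  split; [apply (typ_mut G arity (fun B M s => cl (length B) M /\ clT (length B) s /\ clB B)
      (fun B s => clT (length B) s)) |
    apply (wf_mut G arity (fun B M s => cl (length B) M /\ clT (length B) s /\ clB B)
      (fun B s => clT (length B) s))]; intros; unfold clB in *; cltac.
Qed.

End Cl.

End P4.
Import P4.

Module P5.

Section Sub.
Variable G : Type.
Variable arity : G -> nat.
Local Notation tm := (tm G).
Local Notation ty := (ty G).
Local Notation psub := (psub G).
Local Notation psubT := (psubT G).
Local Notation upt := (upt G).
Local Notation cl := (cl G).
Local Notation clT := (clT G).
Local Notation typ := (typ G arity).
Local Notation wf := (wf G arity).

Fixpoint ftau (tau : list (option tm)) : nat -> tm :=
  match tau with
  | [] => @tVar G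
  | None :: tau' => upt (ftau tau')
  | Some N :: tau' => fun k => match k with 0 => N | S k' => ftau tau' k' end
  end.

Fixpoint cntN (tau : list (option tm)) : nat :=
  match tau with [] => 0 | None :: t => S (cntN t) | Some _ :: t => cntN t end.

Definition liftidx (i k : nat) := if i <=? k then k + 1 else k.

Definition clO (tau : list (option tm)) := forall N, In (Some N) tau -> cl 0 N.

Lemma liftidx_SS i k : liftidx (S i) (S k) = S (liftidx i k).
Proof. unfold liftidx. simpl. destruct (i <=? k); lia. Qed.
Lemma liftidx_S0 i : liftidx (S i) 0 = 0.
Proof. reflexivity. Qed.
Lemma liftidx_0 k : liftidx 0 k = S k.
Proof. unfold liftidx. simpl. lia. Qed.

Lemma lift_lift_comm t c : lift_tm G 1 0 (lift_tm G 1 c t) = lift_tm G 1 (S c) (lift_tm G 1 0 t).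
Proof.
  rewrite !lift_psub, !sub_sub. apply psub_ext. intro k. unfold liftf. cbn [P1.psub].
  repeat match goal with |- context [?a <=? ?b] => destruct (Nat.leb_spec a b) end; f_equal; lia.
Qed.

Lemma lift_var i k : lift_tm G 1 i (tVar k) = tVar (liftidx i k).
Proof. unfold liftidx. simpl. destruct (i <=? k); reflexivity. Qed.

Lemma F2 tau1 tau2 k : clO tau1 ->
  ftau (tau1 ++ None :: tau2) (liftidx (length tau1) k) =
  lift_tm G 1 (cntN tau1) (ftau (tau1 ++ tau2) k).
Proof.
  revert k. induction tau1 as [|[N|] tau1 IH]; intros k HO; cbn [app length cntN].
  - rewrite liftidx_0. reflexivity.
  - destruct k.
    + rewrite liftidx_S0. simpl. rewrite cl0_lift; auto. apply HO. now left.
    + rewrite liftidx_SS. simpl.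
      apply IH. intros M HM; apply HO; now right.
  - destruct k.
    + rewrite liftidx_S0. reflexivity.
    + rewrite liftidx_SS. simpl.
      rewrite IH. apply lift_lift_comm. intros M HM; apply HO; now right.
Qed.

Lemma F3 tau1 tau2 N k :
  ftau (tau1 ++ Some N :: tau2) (liftidx (length tau1) k) = ftau (tau1 ++ tau2) k.
Proof.
  revert k. induction tau1 as [|[M|] tau1 IH]; intros k; cbn [app length].
  - rewrite liftidx_0. reflexivity.
  - destruct k. reflexivity.
    rewrite liftidx_SS. simpl. apply IH.
  - destruct k. reflexivity.
    rewrite liftidx_SS. simpl. now rewrite IH.
Qed.

Lemma F3' tau1 tau2 N : cl 0 N -> ftau (tau1 ++ Some N :: tau2) (length tau1) = N.
Proof.
  intro HN. induction tau1 as [|[M|] tau1 IH]; simpl; auto.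
  rewrite IH. now apply cl0_lift.
Qed.

Lemma F4 tau1 tau2 : ftau (tau1 ++ None :: tau2) (length tau1) = tVar (cntN tau1).
Proof.
  induction tau1 as [|[M|] tau1 IH]; simpl; auto. rewrite IH. simpl. f_equal. lia.
Qed.

Lemma psubT_F2 tau1 tau2 x : clO tau1 ->
  psubT (ftau (tau1 ++ None :: tau2)) (lift_ty G 1 (length tau1) x) =
  lift_ty G 1 (cntN tau1) (psubT (ftau (tau1 ++ tau2)) x).
Proof.
  intro HO. rewrite lift_psubT_gen. rewrite liftT_psub, subT_sub. apply psubT_ext. intro k.
  rewrite <- lift_psub. apply F2; auto.
Qed.
Lemma psubT_F3 tau1 tau2 N x :
  psubT (ftau (tau1 ++ Some N :: tau2)) (lift_ty G 1 (length tau1) x) =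
  psubT (ftau (tau1 ++ tau2)) x.
Proof.
  rewrite lift_psubT_gen. apply psubT_ext. intro k. apply F3.
Qed.
Lemma psub_F3 tau1 tau2 N x :
  psub (ftau (tau1 ++ Some N :: tau2)) (lift_tm G 1 (length tau1) x) =
  psub (ftau (tau1 ++ tau2)) x.
Proof.
  rewrite lift_psub_gen. apply psub_ext. intro k. apply F3.
Qed.

Fixpoint sel (tau : list (option tm)) (B : list ty) : list ty :=
  match tau, B with
  | None :: tau', x :: B' => x :: sel tau' B'
  | Some _ :: tau', _ :: B' => sel tau' B'
  | _, _ => []
  end.

Definition sb tau B := map (psubT (ftau tau)) (sel tau B).

Lemma sel_app tau1 tau2 X1 X2 : length tau1 = length X1 ->
  sel (tau1 ++ tau2) (X1 ++ X2) = sel tau1 X1 ++ sel tau2 X2.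
Proof.
  revert X1; induction tau1 as [|[M|] tau1 IH]; intros [|x X1] H; simpl in *; try lia; auto.
  f_equal. apply IH. lia.
Qed.

Lemma sel_map tau B f : sel tau (map f B) = map f (sel tau B).
Proof.
  revert B; induction tau as [|[M|] tau IH]; intros [|x B]; simpl; auto. f_equal; auto.
Qed.

Lemma length_sel tau B : length tau = length B -> length (sel tau B) = cntN tau.
Proof.
  revert B; induction tau as [|[M|] tau IH]; intros [|x B] H; simpl in *; try lia; auto.
Qed.

Lemma in_sel t tau B : In t (sel tau B) -> In t B.
Proof.
  revert B; induction tau as [|[M|] tau IH]; intros [|x B]; simpl; try tauto.
  intro H; right; auto. intros [H|H]; auto.
Qed.

Lemma sb_ext tau B s : clO tau ->
  sb (None :: tau) (ext G B s) = ext G (sb tau B) (psubT (ftau tau) s).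
Proof.
  intro HO. unfold sb, ext, ins. simpl. f_equal.
  - apply psubT_up_lift.
  - rewrite sel_map, !map_map. apply map_ext. intro. apply psubT_up_lift.
Qed.

Lemma split_at {A} (l : list A) i : i < length l ->
  exists l1 x l2, l = l1 ++ x :: l2 /\ length l1 = i.
Proof.
  revert l; induction i; intros [|y l] H; simpl in *; try lia.
  - exists [], y, l. auto.
  - destruct (IHi l ltac:(lia)) as [l1 [x [l2 [-> Hl]]]]. exists (y :: l1), x, l2. simpl; auto.
Qed.

Lemma firstn_len_app {A} (l1 l2 : list A) : firstn (length l1) (l1 ++ l2) = l1.
Proof. induction l1; simpl; auto; f_equal; auto. Qed.
Lemma skipn_len_app {A} (l1 l2 : list A) : skipn (length l1) (l1 ++ l2) = l2.
Proof. induction l1; simpl; auto. Qed.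

Lemma ins_split i (u : ty) B0 : i <= length B0 ->
  ins G i u B0 = map (lift_ty G 1 i) (firstn i B0 ++ u :: skipn i B0).
Proof. reflexivity. Qed.

Lemma SB2 tau1 tau2 u B0 : clO (tau1 ++ tau2) -> length (tau1 ++ None :: tau2) = S (length B0) ->
  sb (tau1 ++ None :: tau2) (ins G (length tau1) u B0) =
  ins G (cntN tau1) (psubT (ftau (tau1 ++ tau2)) u) (sb (tau1 ++ tau2) B0).
Proof.
  intros HO Hl. rewrite length_app in Hl. simpl in Hl.
  set (F := firstn (length tau1) B0). set (S0 := skipn (length tau1) B0).
  assert (HF : length F = length tau1) by (unfold F; rewrite length_firstn; lia).
  assert (HB : B0 = F ++ S0) by (unfold F, S0; now rewrite firstn_skipn).
  assert (HO1 : clO tau1) by (intros N HN; apply HO; apply in_or_app; auto).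
  set (g := psubT (ftau (tau1 ++ tau2))).
  assert (HX : sb (tau1 ++ tau2) B0 = map g (sel tau1 F) ++ map g (sel tau2 S0)).
  { unfold sb. rewrite HB, sel_app by auto. now rewrite map_app. }
  rewrite HX. unfold ins at 2.
  assert (Hc : cntN tau1 = length (map g (sel tau1 F))) by (rewrite length_map, length_sel; auto).
  rewrite Hc at 2 3. rewrite firstn_len_app, skipn_len_app.
  unfold sb, ins. fold F S0. rewrite sel_map. rewrite sel_app by auto. simpl.
  rewrite !map_map, !map_app. simpl. rewrite !map_map. f_equal.
  - apply map_ext. intro. apply psubT_F2; auto.
  - f_equal. apply psubT_F2; auto. apply map_ext. intro. apply psubT_F2; auto.
Qed.

Lemma SB3 tau1 tau2 N u B0 : length (tau1 ++ Some N :: tau2) = S (length B0) ->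
  sb (tau1 ++ Some N :: tau2) (ins G (length tau1) u B0) = sb (tau1 ++ tau2) B0.
Proof.
  intros Hl. rewrite length_app in Hl. simpl in Hl.
  assert (HF : length (firstn (length tau1) B0) = length tau1) by (rewrite length_firstn; lia).
  unfold sb, ins. rewrite sel_map.
  rewrite sel_app by auto. simpl.
  rewrite <- (firstn_skipn (length tau1) B0) at 3. rewrite sel_app by auto.
  rewrite map_map. rewrite !map_app. apply f_equal2; apply map_ext; intro; apply psubT_F3.
Qed.

Fixpoint condF (f : nat -> tm) (tau : list (option tm)) (B : list ty) : Prop :=
  match tau, B with
  | None :: tau', _ :: B' => condF f tau' B'
  | Some N :: tau', x :: B' =>
      (cl 0 N /\ exists a0, typ [] N a0 /\ tyconv G a0 (psubT f x)) /\ condF f tau' B'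
  | _, _ => True
  end.

Definition cond tau B := length tau = length B /\ condF (ftau tau) tau B.

Lemma condF_app f tau1 tau2 X1 X2 : length tau1 = length X1 ->
  condF f (tau1 ++ tau2) (X1 ++ X2) <-> condF f tau1 X1 /\ condF f tau2 X2.
Proof.
  revert X1; induction tau1 as [|[M|] tau1 IH]; intros [|x X1] H; simpl in *; try lia; try tauto.
  rewrite IH by lia. tauto. apply IH. lia.
Qed.

Lemma typ_nil_closed N a : typ [] N a -> cl 0 N /\ clT 0 a.
Proof. intro H. apply (proj1 (typ_closed_all G arity)) in H. simpl in H. tauto. Qed.

Lemma condF_map_fwd f g h tau B : condF f tau B ->
  (forall a0 x, clT 0 a0 -> tyconv G a0 (psubT f x) -> tyconv G a0 (psubT g (h x))) ->
  condF g tau (map h B).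
Proof.
  revert B; induction tau as [|[M|] tau IH]; intros [|x B] H1 H2; simpl in *; auto.
  destruct H1 as [[Hc [a0 [Ht Hv]]] Hr]. split; auto. split; auto. exists a0. split; auto.
  apply H2; auto. eapply typ_nil_closed; eauto.
Qed.

Lemma condF_map_bwd f g h tau B : condF f tau (map h B) ->
  (forall a0 x, clT 0 a0 -> tyconv G a0 (psubT f (h x)) -> tyconv G a0 (psubT g x)) ->
  condF g tau B.
Proof.
  revert B; induction tau as [|[M|] tau IH]; intros [|x B] H1 H2; simpl in *; auto.
  destruct H1 as [[Hc [a0 [Ht Hv]]] Hr]. split; auto. split; auto. exists a0. split; auto.
  apply H2; auto. eapply typ_nil_closed; eauto.
Qed.

Lemma condF_clO f tau B : length tau = length B -> condF f tau B -> clO tau.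
Proof.
  revert B; induction tau as [|[M|] tau IH]; intros [|x B] Hl H N HN; simpl in *; try lia; try tauto.
  destruct HN as [HN|HN]. injection HN; intros <-; tauto. eapply IH; eauto; tauto.
  destruct HN as [HN|HN]. discriminate. eapply IH; eauto.
Qed.
Lemma cond_clO tau B : cond tau B -> clO tau.
Proof. intros [Hl H]. eapply condF_clO; eauto. Qed.

Lemma tyconv_unlift a0 j X : clT 0 a0 -> tyconv G a0 (lift_ty G 1 j X) -> tyconv G a0 X.
Proof.
  intros Hc H. apply (tyconv_psub G _ _ (substf G j (tNum 0))) in H.
  rewrite <- !substT_psub, substT_lift_cancel in H. rewrite substT_psub, clT0_psub in H; auto.
Qed.
Lemma tyconv_lift a0 j X : clT 0 a0 -> tyconv G a0 X -> tyconv G a0 (lift_ty G 1 j X).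
Proof.
  intros Hc H. apply (tyconv_psub G _ _ (liftf G 1 j)) in H.
  rewrite <- !liftT_psub in H. rewrite liftT_psub, clT0_psub in H; auto.
Qed.

Lemma cond_ext tau B s : cond tau B -> cond (None :: tau) (ext G B s).
Proof.
  intros [Hl H]. split. rewrite length_ext. simpl; lia.
  unfold ext, ins. simpl. eapply condF_map_fwd; eauto.
  intros a0 x Hc Hv. rewrite psubT_up_lift. now apply tyconv_lift.
Qed.

End Sub.

End P5.
Import P5.

Module P6.

Section TSP.
Variable G : Type.
Variable arity : G -> nat.
Local Notation tm := (tm G).
Local Notation ty := (ty G).
Local Notation psub := (psub G).
Local Notation psubT := (psubT G).
Local Notation upt := (upt G).
Local Notation cl := (cl G).
Local Notation clT := (clT G).
Local Notation typ := (typ G arity).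
Local Notation wf := (wf G arity).
Local Notation ftau := (ftau G).
Local Notation sb := (sb G).
Local Notation cond := (cond G arity).
Local Notation condF := (condF G arity).

Hypothesis Hweak : forall N a C, typ [] N a -> (forall t, In t C -> wf C t) -> typ C N a.

Lemma in_sb t tau B : In t (sb tau B) -> exists x, In x B /\ t = psubT (ftau tau) x.
Proof.
  unfold sb. intro H. apply in_map_iff in H. destruct H as [x [<- Hx]].
  exists x. split; auto. eapply in_sel; eauto.
Qed.

Lemma cond_var tau1 o tau2 u B0 :
  cond (tau1 ++ o :: tau2) (ins G (length tau1) u B0) ->
  cond (tau1 ++ tau2) B0 /\ length tau1 <= length B0 /\
  match o with
  | None => True
  | Some N => cl 0 N /\ exists a0, typ [] N a0 /\ tyconv G a0 (psubT (ftau (tau1 ++ tau2)) u)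
  end.
Proof.
  intros [Hl Hc]. rewrite length_ins, length_app in Hl. simpl in Hl.
  assert (HO : clO G (tau1 ++ o :: tau2)) by (eapply cond_clO; split; eauto; now rewrite length_ins, length_app).
  assert (HO' : clO G (tau1 ++ tau2)).
  { intros N HN. apply HO. apply in_app_or in HN. apply in_or_app. simpl. tauto. }
  set (F := firstn (length tau1) B0). set (S0 := skipn (length tau1) B0).
  assert (HF : length F = length tau1) by (unfold F; rewrite length_firstn; lia).
  assert (HS : length S0 = length tau2) by (unfold S0; rewrite length_skipn; lia).
  assert (HB : B0 = F ++ S0) by (unfold F, S0; now rewrite firstn_skipn).
  assert (Hc' : condF (ftau (tau1 ++ tau2)) (tau1 ++ o :: tau2) (F ++ u :: S0)).
  { unfold ins in Hc. eapply condF_map_bwd; [exact Hc|]. intros a0 x Ha Hv.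
    destruct o as [N|].
    - now rewrite psubT_F3 in Hv.
    - rewrite psubT_F2 in Hv by (intros M HM; apply HO'; apply in_or_app; auto).
      eapply tyconv_unlift; eauto. }
  apply condF_app in Hc'; auto. destruct Hc' as [H1 H2].
  split; [|split; [lia|]].
  - split. rewrite length_app; lia. rewrite HB. apply condF_app; auto.
    destruct o; simpl in H2; tauto.
  - destruct o; simpl in H2; tauto.
Qed.

Lemma sb_in_wf (P : list ty -> ty -> Prop) tau B :
  (forall t, In t B -> P B t) -> forall t, In t (sb tau B) -> exists x, In x B /\ P B x /\ t = psubT (ftau tau) x.
Proof. intros H t Ht. apply in_sb in Ht. destruct Ht as [x [Hx ->]]. eauto. Qed.

Lemma cntN_app t1 t2 : cntN G (t1 ++ t2) = cntN G t1 + cntN G t2.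
Proof. induction t1 as [|[x|] t1 IH]; simpl; auto. Qed.

Lemma tvar_case B i s tau :
  i <= length B ->
  (forall t, In t B -> forall tau, cond tau B -> wf (sb tau B) (psubT (ftau tau) t)) ->
  (forall tau, cond tau B -> wf (sb tau B) (psubT (ftau tau) s)) ->
  cond tau (ins G i s B) ->
  typ (sb tau (ins G i s B)) (ftau tau i) (psubT (ftau tau) (lift_ty G 1 i s)).
Proof.
  intros Hi H1 H3 H4.
  assert (Hl : length tau = S (length B)) by (destruct H4 as [Hl _]; now rewrite length_ins in Hl).
  destruct (split_at tau i ltac:(lia)) as [t1 [o [t2 [-> Ht1]]]]. subst i.
  pose proof (cond_var _ _ _ _ _ H4) as [Hc [_ Ho]].
  assert (Hwb : forall t, In t (sb (t1 ++ t2) B) -> wf (sb (t1 ++ t2) B) t).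
  { intros t Ht. apply in_sb in Ht. destruct Ht as [x [Hx ->]]. eauto. }
  destruct o as [N|].
  - destruct Ho as [HN [a0 [Ha Hv]]].
    rewrite SB3 by auto. rewrite F3' by auto. rewrite psubT_F3.
    eapply T_conv; eauto.
  - rewrite SB2 by (auto; eapply cond_clO; eauto). rewrite F4.
    rewrite psubT_F2 by (intros M HM; eapply cond_clO; eauto; apply in_or_app; auto).
    apply T_var; auto.
    unfold sb. rewrite length_map, length_sel. rewrite cntN_app. lia.
    destruct Hc; auto.
Qed.

Ltac wfbtac := let t := fresh in let Ht := fresh in
  intros t Ht; apply in_sb in Ht; destruct Ht as [? [? ->]]; eauto.

Lemma TSP_all :
  (forall B M s, typ B M s -> forall tau, cond tau B ->
     typ (sb tau B) (psub (ftau tau) M) (psubT (ftau tau) s)) /\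
  (forall B s, wf B s -> forall tau, cond tau B -> wf (sb tau B) (psubT (ftau tau) s)).
Proof.
  split; [apply (typ_mut G arity (fun B M s => forall tau, cond tau B ->
     typ (sb tau B) (psub (ftau tau) M) (psubT (ftau tau) s))
      (fun B s => forall tau, cond tau B -> wf (sb tau B) (psubT (ftau tau) s))) |
    apply (wf_mut G arity (fun B M s => forall tau, cond tau B ->
     typ (sb tau B) (psub (ftau tau) M) (psubT (ftau tau) s))
      (fun B s => forall tau, cond tau B -> wf (sb tau B) (psubT (ftau tau) s)))]; intros.
  all: rewrite ?psub_arrow; cbn [P1.psub P1.psubT]; rewrite ?psub_arrow; cbn [P1.psub P1.psubT];
       rewrite ?psub_arrow; cbn [P1.psub P1.psubT]; rewrite ?psub_up_lift.
  all: try (econstructor; eauto; wfbtac; fail).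
  all: try (constructor; eauto; rewrite <- sb_ext by (eapply cond_clO; eauto);
            match goal with H : forall tau, cond tau (ext G _ _) -> _ |- _ => apply H end;
            now apply cond_ext).
  all: try (rewrite psubT_subst0; econstructor; eauto; fail).
  all: try (eapply T_conv; eauto; apply tyconv_psub; auto; fail).
  all: try (eapply T_Y; [wfbtac|eauto|apply tyconv_psub; eauto|apply yshape_psub; eauto]).
  all: eapply tvar_case; eauto.
Qed.

End TSP.

End P6.
Import P6.

Module P7.

Section Typn.
Variable G : Type.
Variable arity : G -> nat.
Local Notation tm := (tm G).
Local Notation ty := (ty G).
Local Notation typ := (typ G arity).
Local Notation wf := (wf G arity).
Local Notation arrow := (arrow G).
Local Notation ins := (ins G).
Local Notation ext := (ext G).

Inductive typn : nat -> list ty -> tm -> ty -> Prop :=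
| Tn_var : forall n B i s, i <= length B ->
    (forall t, In t B -> wfn n B t) -> wfn n B s ->
    typn (S n) (ins i s B) (tVar i) (lift_ty G 1 i s)
| Tn_lam : forall n B s N t, typn n (ext B s) N t -> typn (S n) B (tLam s N) (TPi s t)
| Tn_app : forall n B P Q s t, typn n B P (TPi s t) -> typn n B Q s ->
    typn (S n) B (tApp P Q) (subst_ty G 0 Q t)
| Tn_succ : forall n B, (forall t, In t B -> wfn n B t) -> typn (S n) B tSucc (arrow TNat TNat)
| Tn_pred : forall n B, (forall t, In t B -> wfn n B t) -> typn (S n) B tPred (arrow TNat TNat)
| Tn_if : forall n B, (forall t, In t B -> wfn n B t) ->
    typn (S n) B tIf (arrow TNat (arrow TNat (arrow TNat TNat)))
| Tn_get : forall n B, (forall t, In t B -> wfn n B t) ->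
    typn (S n) B tGet (arrow TNat (arrow TNat TNat))
| Tn_set : forall n B, (forall t, In t B -> wfn n B t) ->
    typn (S n) B tSet (arrow TNat (arrow TNat TNat))
| Tn_num : forall n B k, (forall t, In t B -> wfn n B t) -> typn (S n) B (tNum k) TIdx
| Tn_gate : forall n B g, (forall t, In t B -> wfn n B t) ->
    typn (S n) B (tGate g) (TCirc (tNum (arity g)))
| Tn_ifc : forall n B E, typn n B E TIdx ->
    typn (S n) B tIf (arrow TNat (arrow (TCirc E) (arrow (TCirc E) (TCirc E))))
| Tn_Y : forall n B s s', (forall t, In t B -> wfn n B t) -> wfn n B s ->
    tyconv G s s' -> yshape G s' ->
    typn (S n) B (tY s) (arrow (arrow s s) s)
| Tn_idx : forall n B M, typn n B M TIdx -> typn (S n) B M TNat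
| Tn_plus : forall n B a b, typn n B a TIdx -> typn n B b TIdx -> typn (S n) B (tPlus a b) TIdx
| Tn_mult : forall n B a b, typn n B a TIdx -> typn n B b TIdx -> typn (S n) B (tMult a b) TIdx
| Tn_size : forall n B M E, typn n B M (TCirc E) -> typn (S n) B (tApp tSize M) TIdx
| Tn_cons : forall n B E, typn n B E TIdx ->
    typn (S n) B tCons (arrow (TCirc E) (arrow (TCirc E) (TCirc E)))
| Tn_par : forall n B E0 E1, typn n B E0 TIdx -> typn n B E1 TIdx ->
    typn (S n) B tPar (arrow (TCirc E0) (arrow (TCirc E1)
                  (TCirc (tPlus (tPlus E0 E1) (tNum 1)))))
| Tn_rev : forall n B E, typn n B E TIdx -> typn (S n) B tRev (arrow (TCirc E) (TCirc E))
| Tn_iter : forall n B E0 E1, typn n B E0 TIdx -> typn n B E1 TIdx ->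
    typn (S n) B tIter
      (TPi TIdx (arrow (TCirc (lift_tm G 1 0 E0))
                   (arrow (TCirc (lift_tm G 1 0 E1))
                      (TCirc (tPlus (lift_tm G 1 0 E0)
                                (tMult (tPlus (tNum 1) (lift_tm G 1 0 E1)) (tVar 0)))))))
| Tn_dmeas : forall n B E, typn n B E TIdx ->
    typn (S n) B tDMeas (arrow TNat (arrow (TCirc E) TNat))
| Tn_conv : forall n B M s t, typn n B M s -> tyconv G s t -> wfn n B t -> typn (S n) B M t
with wfn : nat -> list ty -> ty -> Prop :=
| Wn_nat : forall n B, wfn (S n) B TNat
| Wn_idx : forall n B, wfn (S n) B TIdx
| Wn_circ : forall n B E, typn n B E TIdx -> wfn (S n) B (TCirc E)
| Wn_pi : forall n B s t, wfn n B s -> wfn n (ext B s) t -> wfn (S n) B (TPi s t).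

Scheme typn_mut := Minimality for typn Sort Prop
with wfn_mut := Minimality for wfn Sort Prop.

Lemma typn_typ_all :
  (forall n B M s, typn n B M s -> typ B M s) /\ (forall n B s, wfn n B s -> wf B s).
Proof.
  split; [apply (typn_mut (fun _ B M s => typ B M s) (fun _ B s => wf B s)) |
          apply (wfn_mut (fun _ B M s => typ B M s) (fun _ B s => wf B s))];
  intros; econstructor; eauto.
Qed.

Lemma typn_mono_all :
  (forall n B M s, typn n B M s -> forall m, n <= m -> typn m B M s) /\
  (forall n B s, wfn n B s -> forall m, n <= m -> wfn m B s).
Proof.
  split; [apply (typn_mut (fun n B M s => forall m, n <= m -> typn m B M s)
     (fun n B s => forall m, n <= m -> wfn m B s)) |
          apply (wfn_mut (fun n B M s => forall m, n <= m -> typn m B M s)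
     (fun n B s => forall m, n <= m -> wfn m B s))];
  intros; (destruct m; [lia|]); econstructor; eauto; try (intros; apply H0; auto; lia);
  try (apply H1; lia); try (apply H0; lia); try (apply H2; lia); try (apply H3; lia).
  all: intros; apply H1; auto; lia.
Qed.

Lemma wfn_list_max B (L : list ty) : (forall t, In t L -> exists n, wfn n B t) ->
  exists n, forall t, In t L -> wfn n B t.
Proof.
  induction L as [|x L IH]; intros H. exists 0; simpl; tauto.
  destruct (H x (or_introl eq_refl)) as [n1 H1].
  destruct IH as [n2 H2]. intros; apply H; now right.
  exists (Nat.max n1 n2). intros t [<-|Ht].
  - eapply typn_mono_all; eauto; lia.
  - eapply typn_mono_all; eauto; lia.
Qed.

Ltac monoize := repeat match goal with
    | H : typn ?k ?B ?M ?s |- _ =>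
       let H' := fresh in assert (H' : forall m, k <= m -> typn m B M s) by
         (intros; eapply typn_mono_all; eauto); clear H
    | H : wfn ?k ?B ?s |- _ =>
       let H' := fresh in assert (H' : forall m, k <= m -> wfn m B s) by
         (intros; eapply typn_mono_all; eauto); clear H
    | H : forall t, In t ?B -> wfn ?k ?B t |- _ =>
       let H' := fresh in assert (H' : forall m, k <= m -> forall t, In t B -> wfn m B t) by
         (intros; eapply typn_mono_all; eauto); clear H
   end.
Ltac collect acc := lazymatch goal with
    | H : forall m, ?k <= m -> _ |- _ => revert H; collect (k + acc)
    | _ => exists (S acc); intros
   end.

Lemma typ_typn_all :
  (forall B M s, typ B M s -> exists n, typn n B M s) /\ (forall B s, wf B s -> exists n, wfn n B s).
Proof.
  assert (M2 : forall n1 n2 B M s B' M' s', typn n1 B M s -> typn n2 B' M' s' ->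
     typn (Nat.max n1 n2) B M s /\ typn (Nat.max n1 n2) B' M' s').
  { intros; split; eapply typn_mono_all; eauto; lia. }
  split; [apply (typ_mut G arity (fun B M s => exists n, typn n B M s) (fun B s => exists n, wfn n B s)) |
          apply (wf_mut G arity (fun B M s => exists n, typn n B M s) (fun B s => exists n, wfn n B s))];
  intros;
  repeat match goal with
  | H : forall t, In t ?B -> exists n, wfn n ?B t |- _ =>
      apply wfn_list_max in H; destruct H
  | H : exists n, _ |- _ => destruct H
  end.
  all: monoize; collect 0; econstructor; eauto;
    try (intros; match goal with H : forall m, _ <= m -> _ |- _ => solve [apply H; lia | eapply H; [lia|eauto]] end).
  all: try (intros; match goal with H : forall m, _ <= m -> _ |- _ => solve [apply H; lia | eapply H; [lia|eauto]] end).
  all: try (intros; match goal with H : forall m, _ <= m -> _ |- _ => solve [apply H; lia | eapply H; [lia|eauto]] end).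
Qed.

End Typn.

End P7.
Import P7.

Module P8.

Section Shuf.
Variable G : Type.
Variable arity : G -> nat.
Local Notation tm := (tm G).
Local Notation ty := (ty G).
Local Notation psub := (psub G).
Local Notation psubT := (psubT G).
Local Notation typ := (typ G arity).
Local Notation wf := (wf G arity).
Local Notation typn := (typn G arity).
Local Notation wfn := (wfn G arity).
Local Notation ren := (ren G).
Local Notation liftidx := liftidx.

Fixpoint posT (m : list bool) (k : nat) : nat :=
  match m with
  | [] => k
  | true :: m' => match k with 0 => 0 | S k' => S (posT m' k') end
  | false :: m' => S (posT m' k)
  end.
Fixpoint posF (m : list bool) (k : nat) : nat :=
  match m with
  | [] => k
  | false :: m' => match k with 0 => 0 | S k' => S (posF m' k') end
  | true :: m' => S (posF m' k)
  end.
Fixpoint cT (m : list bool) : nat :=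
  match m with [] => 0 | true :: m' => S (cT m') | false :: m' => cT m' end.
Fixpoint cF (m : list bool) : nat :=
  match m with [] => 0 | false :: m' => S (cF m') | true :: m' => cF m' end.

Fixpoint mg {A} (m : list bool) (X Y : list A) : list A :=
  match m with
  | [] => []
  | true :: m' => match X with x :: X' => x :: mg m' X' Y | [] => [] end
  | false :: m' => match Y with y :: Y' => y :: mg m' X Y' | [] => [] end
  end.

Definition MG m (B E : list ty) : list ty :=
  mg m (map (psubT (ren (posT m))) B) (map (psubT (ren (posF m))) E).

Lemma posF_neg m k : posF m k = posT (map negb m) k.
Proof. revert k; induction m as [|[|] m IH]; intros k; simpl; auto; destruct k; auto. Qed.
Lemma posT_neg m k : posT m k = posF (map negb m) k.
Proof. revert k; induction m as [|[|] m IH]; intros k; simpl; auto; destruct k; auto. Qed.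
Lemma cT_neg m : cT (map negb m) = cF m.
Proof. induction m as [|[|] m IH]; simpl; auto. Qed.
Lemma cF_neg m : cF (map negb m) = cT m.
Proof. induction m as [|[|] m IH]; simpl; auto. Qed.
Lemma mg_neg {A} m (X Y : list A) : mg (map negb m) Y X = mg m X Y.
Proof. revert X Y; induction m as [|[|] m IH]; intros [|x X] [|y Y]; simpl; auto; f_equal; auto. Qed.

Lemma MG_neg m B E : MG (map negb m) E B = MG m B E.
Proof.
  unfold MG. rewrite mg_neg. f_equal; apply map_ext; intro; apply psubT_ext; intro k; unfold ren;
  f_equal; first [apply posT_neg | apply posF_neg | symmetry; apply posT_neg | symmetry; apply posF_neg].
Qed.

Lemma map_mg {A B} (f : A -> B) m X Y : map f (mg m X Y) = mg m (map f X) (map f Y).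
Proof. revert X Y; induction m as [|[|] m IH]; intros [|x X] [|y Y]; simpl; auto; f_equal; auto. Qed.

Lemma mg_app {A} m1 m2 (X1 X2 Y1 Y2 : list A) : cT m1 = length X1 -> cF m1 = length Y1 ->
  mg (m1 ++ m2) (X1 ++ X2) (Y1 ++ Y2) = mg m1 X1 Y1 ++ mg m2 X2 Y2.
Proof.
  revert X1 Y1; induction m1 as [|[|] m1 IH]; intros X1 Y1 H1 H2; simpl in *.
  - destruct X1, Y1; simpl in *; try lia; reflexivity.
  - destruct X1 as [|x X1]; simpl in *; try lia. f_equal. apply IH; simpl; lia.
  - destruct Y1 as [|y Y1]; simpl in *; try lia. f_equal. apply IH; simpl; lia.
Qed.

Lemma length_mg {A} m (X Y : list A) : cT m = length X -> cF m = length Y -> length (mg m X Y) = length m.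
Proof.
  revert X Y; induction m as [|[|] m IH]; intros [|x X] [|y Y] H1 H2; simpl in *; try lia; auto;
  f_equal; apply IH; simpl; lia.
Qed.

Lemma in_mg {A} (t : A) m X Y : In t (mg m X Y) -> In t X \/ In t Y.
Proof.
  revert X Y; induction m as [|[|] m IH]; intros [|x X] [|y Y]; simpl; try tauto;
  intros [H|H]; auto; apply IH in H; simpl; tauto.
Qed.

Lemma in_MG t m B E : In t (MG m B E) ->
  (exists x, In x B /\ t = psubT (ren (posT m)) x) \/ (exists y, In y E /\ t = psubT (ren (posF m)) y).
Proof.
  unfold MG. intro H. apply in_mg in H. destruct H as [H|H]; apply in_map_iff in H;
  destruct H as [x [<- Hx]]; eauto.
Qed.

Lemma up_ren_eq r k : upt G (ren r) k = ren (upr r) k.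
Proof. apply up_ren. Qed.

Lemma ren_lift1 r x : psubT (ren r) (lift_ty G 1 0 x) = psubT (ren (fun k => r (S k))) x.
Proof. rewrite lift1T_ren, (proj2 (sub_ren_all G)). reflexivity. Qed.
Lemma lift1_renT r x : lift_ty G 1 0 (psubT (ren r) x) = psubT (ren (fun k => S (r k))) x.
Proof. rewrite lift1T_ren, (proj2 (ren_ren_all G)). reflexivity. Qed.

Lemma W1 m B E s : MG (true :: m) (ext G B s) E = ext G (MG m B E) (psubT (ren (posT m)) s).
Proof.
  unfold MG, ext, ins. simpl. f_equal.
  - rewrite ren_lift1, lift1_renT. reflexivity.
  - rewrite map_mg, !map_map. f_equal; apply map_ext; intro.
    + rewrite ren_lift1, lift1_renT. reflexivity.
    + rewrite lift1_renT. reflexivity.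
Qed.

Lemma posW_T_dummy : True. Proof. exact I. Qed.
Lemma posW_T m1 m2 k :
  posT (m1 ++ true :: m2) (liftidx (cT m1) k) = liftidx (length m1) (posT (m1 ++ m2) k).
Proof.
  revert k; induction m1 as [|[|] m1 IH]; intros k; cbn [app cT length posT].
  - rewrite !liftidx_0. reflexivity.
  - destruct k. reflexivity. rewrite !liftidx_SS. cbv iota. now rewrite IH.
  - rewrite IH. now rewrite liftidx_SS.
Qed.

Lemma posW_F m1 m2 k :
  posF (m1 ++ true :: m2) k = liftidx (length m1) (posF (m1 ++ m2) k).
Proof.
  revert k; induction m1 as [|[|] m1 IH]; intros k; cbn [app cF length posF].
  - rewrite liftidx_0. reflexivity.
  - rewrite IH. now rewrite liftidx_SS.
  - destruct k. reflexivity. rewrite IH. now rewrite liftidx_SS.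
Qed.

Lemma posW_i m1 m2 : posT (m1 ++ true :: m2) (cT m1) = length m1.
Proof. induction m1 as [|[|] m1 IH]; simpl; auto. Qed.

Lemma liftT_ren_gen j x r :
  psubT (ren r) (lift_ty G 1 j x) = psubT (ren (fun k => r (liftidx j k))) x.
Proof.
  rewrite lift_psubT_gen. apply psubT_ext. intro k. unfold ren, liftidx. destruct (j <=? k); reflexivity.
Qed.
Lemma lift_renT_gen j x r :
  lift_ty G 1 j (psubT (ren r) x) = psubT (ren (fun k => liftidx j (r k))) x.
Proof.
  rewrite liftT_psub, subT_sub. apply psubT_ext. intro k. unfold liftf, ren, liftidx. simpl.
  destruct (j <=? r k); reflexivity.
Qed.

Lemma firstn_eq_app {A} n (l1 l2 : list A) : n = length l1 -> firstn n (l1 ++ l2) = l1.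
Proof. intros ->. apply firstn_len_app. Qed.
Lemma skipn_eq_app {A} n (l1 l2 : list A) : n = length l1 -> skipn n (l1 ++ l2) = l2.
Proof. intros ->. apply skipn_len_app. Qed.

Lemma W2 m1 m2 u B0 E : cT (m1 ++ true :: m2) = S (length B0) -> cF (m1 ++ true :: m2) = length E ->
  MG (m1 ++ true :: m2) (ins G (cT m1) u B0) E =
  ins G (length m1) (psubT (ren (posT (m1 ++ m2))) u) (MG (m1 ++ m2) B0 E).
Proof.
  intros H1 H2.
  assert (Hc1 : cT (m1 ++ true :: m2) = cT m1 + S (cT m2)) by (clear; induction m1 as [|[|] m1 IH]; simpl; lia).
  assert (Hc2 : cF (m1 ++ true :: m2) = cF m1 + cF m2) by (clear; induction m1 as [|[|] m1 IH]; simpl; lia).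
  assert (Hc1' : cT (m1 ++ m2) = cT m1 + cT m2) by (clear; induction m1 as [|[|] m1 IH]; simpl; lia).
  assert (Hc2' : cF (m1 ++ m2) = cF m1 + cF m2) by (clear; induction m1 as [|[|] m1 IH]; simpl; lia).
  set (F := firstn (cT m1) B0). set (S0 := skipn (cT m1) B0).
  set (E1 := firstn (cF m1) E). set (E2 := skipn (cF m1) E).
  assert (HF : length F = cT m1) by (unfold F; rewrite length_firstn; lia).
  assert (HS : length S0 = cT m2) by (unfold S0; rewrite length_skipn; lia).
  assert (HE1 : length E1 = cF m1) by (unfold E1; rewrite length_firstn; lia).
  assert (HB : B0 = F ++ S0) by (unfold F, S0; now rewrite firstn_skipn).
  assert (HE : E = E1 ++ E2) by (unfold E1, E2; now rewrite firstn_skipn).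
  set (m := m1 ++ true :: m2). set (m' := m1 ++ m2).
  assert (PT : forall x, psubT (ren (posT m)) (lift_ty G 1 (cT m1) x) =
                         lift_ty G 1 (length m1) (psubT (ren (posT m')) x)).
  { intro x. rewrite liftT_ren_gen, lift_renT_gen. apply psubT_ext. intro k. unfold ren. f_equal.
    apply posW_T. }
  assert (PF : forall x, psubT (ren (posF m)) x = lift_ty G 1 (length m1) (psubT (ren (posF m')) x)).
  { intro x. rewrite lift_renT_gen. apply psubT_ext. intro k. unfold ren. f_equal. apply posW_F. }
  unfold MG. unfold ins at 1. fold F S0. rewrite map_map.
  rewrite HE. rewrite !map_app.
  unfold m at 1. rewrite mg_app by (rewrite length_map; auto). simpl.
  unfold ins. rewrite HB, !map_app.
  unfold m'. rewrite mg_app by (rewrite length_map; auto).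
  assert (HL : length m1 = length (mg m1 (map (psubT (ren (posT (m1 ++ m2)))) F)
                                  (map (psubT (ren (posF (m1 ++ m2)))) E1)))
    by (rewrite length_mg; auto; rewrite length_map; auto).
  rewrite (firstn_eq_app _ _ _ HL), (skipn_eq_app _ _ _ HL).
  simpl. rewrite !map_mg, !map_map. f_equal.
  - f_equal; apply map_ext; intro; [apply PT| apply PF].
  - f_equal. apply PT. f_equal; apply map_ext; intro; [apply PT| apply PF].
Qed.

End Shuf.

End P8.
Import P8.

Module P9.

Section W.
Variable G : Type.
Variable arity : G -> nat.
Local Notation tm := (tm G).
Local Notation ty := (ty G).
Local Notation psub := (psub G).
Local Notation psubT := (psubT G).
Local Notation typ := (typ G arity).
Local Notation wf := (wf G arity).
Local Notation typn := (typn G arity).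
Local Notation wfn := (wfn G arity).
Local Notation ren := (ren G).
Local Notation MG := (MG G).

Lemma split_true m i : i < cT m -> exists m1 m2, m = m1 ++ true :: m2 /\ cT m1 = i.
Proof.
  revert i; induction m as [|[|] m IH]; intros i H; simpl in *; try lia.
  - destruct i. exists [], m; auto.
    destruct (IH i ltac:(lia)) as [m1 [m2 [-> Hc]]]. exists (true :: m1), m2. simpl; auto.
  - destruct (IH i H) as [m1 [m2 [-> Hc]]]. exists (false :: m1), m2. simpl; auto.
Qed.

Lemma PTlem m1 m2 x : psubT (ren (posT (m1 ++ true :: m2))) (lift_ty G 1 (cT m1) x) =
                       lift_ty G 1 (length m1) (psubT (ren (posT (m1 ++ m2))) x).
Proof.
  rewrite liftT_ren_gen, lift_renT_gen. apply psubT_ext. intro k. unfold ren. f_equal.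
  apply posW_T.
Qed.

Lemma cT_app m1 m2 : cT (m1 ++ m2) = cT m1 + cT m2.
Proof. induction m1 as [|[|] m1 IH]; simpl; lia. Qed.
Lemma cF_app m1 m2 : cF (m1 ++ m2) = cF m1 + cF m2.
Proof. induction m1 as [|[|] m1 IH]; simpl; lia. Qed.
Lemma len_cTF m : length m = cT m + cF m.
Proof. induction m as [|[|] m IH]; simpl; lia. Qed.

Lemma length_MG m B E : cT m = length B -> cF m = length E -> length (MG m B E) = length m.
Proof. intros. unfold MG. apply length_mg; rewrite length_map; auto. Qed.

Definition WT n := forall h B M s, typn h B M s -> forall hx m E, h + hx <= n ->
  cT m = length B -> cF m = length E -> (forall t, In t E -> wfn hx E t) ->
  typ (MG m B E) (psub (ren (posT m)) M) (psubT (ren (posT m)) s).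
Definition WW n := forall h B s, wfn h B s -> forall hx m E, h + hx <= n ->
  cT m = length B -> cF m = length E -> (forall t, In t E -> wfn hx E t) ->
  wf (MG m B E) (psubT (ren (posT m)) s).

Lemma wfb_MG n : WW n -> forall h0 hx m B E, h0 + hx <= n ->
  cT m = length B -> cF m = length E -> (forall t, In t E -> wfn hx E t) ->
  (forall t, In t B -> wfn h0 B t) -> forall t, In t (MG m B E) -> wf (MG m B E) t.
Proof.
  intros IHw h0 hx m B E Hle H1 H2 HE HB t Ht. apply in_MG in Ht.
  destruct Ht as [[x [Hx ->]]|[y [Hy ->]]].
  - eapply IHw; eauto.
  - rewrite <- MG_neg. rewrite (psubT_ext G _ _ (ren (posT (map negb m)))).
    eapply IHw; eauto. lia. now rewrite cT_neg. now rewrite cF_neg.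
    intro k. unfold ren. f_equal. apply posF_neg.
Qed.

Lemma up_posT m k : upt G (ren (posT m)) k = ren (posT (true :: m)) k.
Proof. rewrite up_ren. destruct k; reflexivity. Qed.

Lemma W_all n : WT n /\ WW n.
Proof.
  induction n as [|n [IHt IHw]].
  - split. intros h B M s D; destruct D; intros; lia. intros h B s D; destruct D; intros; lia.
  - split.
    + intros h B M s D. destruct D; intros hx m Ex Hle HcT HcF HE.
      all: assert (Hwb := wfb_MG n IHw); unfold WT, WW in IHt, IHw.
      all: rewrite ?psub_arrow; cbn [P1.psub P1.psubT]; rewrite ?psub_arrow; cbn [P1.psub P1.psubT];
       rewrite ?psub_arrow; cbn [P1.psub P1.psubT]; rewrite ?psub_up_lift.
      all: repeat match goal with
        | D : typn ?h ?B ?X ?Y |- _ =>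
            let H := fresh in pose proof (IHt _ _ _ _ D hx m Ex ltac:(lia) HcT HcF HE) as H; clear D;
            cbn [P1.psub P1.psubT] in H
        | D : wfn ?h ?B ?Y |- _ =>
            let H := fresh in pose proof (IHw _ _ _ D hx m Ex ltac:(lia) HcT HcF HE) as H; clear D;
            cbn [P1.psub P1.psubT] in H
        | D : forall t, In t ?B -> wfn ?h ?B t |- _ =>
            let H := fresh in pose proof (Hwb h hx m B Ex ltac:(lia) HcT HcF HE D) as H; clear D
        end.
      all: try (rewrite psubT_subst0).
      all: try (econstructor; eauto; try apply tyconv_psub; try apply yshape_psub; eauto; fail).
      all: try (eapply T_Y; [eauto|eauto|apply tyconv_psub; eassumption|apply yshape_psub; eassumption]).
      *
        assert (Hl : cT m = S (length B)) by (rewrite HcT; apply length_ins).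
        destruct (split_true m i ltac:(lia)) as [m1 [m2 [-> Hi]]]. subst i.
        rewrite W2 by auto.
        replace (ren (posT (m1 ++ true :: m2)) (cT m1)) with (@tVar G (length m1))
          by (unfold ren; now rewrite posW_i).
        rewrite PTlem.
        assert (Hc' : cT (m1 ++ m2) = length B) by (rewrite cT_app; rewrite cT_app in Hl; simpl in Hl; lia).
        assert (Hf' : cF (m1 ++ m2) = length Ex) by (rewrite cF_app; rewrite cF_app in HcF; simpl in HcF; lia).
        apply T_var.
        -- rewrite length_MG by auto. rewrite length_app. lia.
        -- eapply Hwb; eauto. lia.
        -- eapply IHw; eauto. lia.
      *
        assert (Hc' : cT (true :: m) = length (ext G B s)) by (cbn [cT]; rewrite length_ext; lia).
        pose proof (IHt _ _ _ _ D hx (true :: m) Ex ltac:(lia) Hc' HcF HE) as H.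
        rewrite W1 in H. apply T_lam.
        rewrite (psub_ext G N (upt G (ren (posT m))) (ren (posT (true :: m)))) by apply up_posT.
        rewrite (psubT_ext G t (upt G (ren (posT m))) (ren (posT (true :: m)))) by apply up_posT.
        exact H.
    + intros h B s D. destruct D; intros hx m Ex Hle HcT HcF HE;
        assert (Hwb := wfb_MG n IHw); unfold WT, WW in IHt, IHw; cbn [P1.psubT].
      * constructor.
      * constructor.
      * constructor. match goal with D : typn _ _ _ _ |- _ =>
          pose proof (IHt _ _ _ _ D hx m Ex ltac:(lia) HcT HcF HE) as H'; exact H' end.
      * constructor. eapply IHw; eauto. lia.
        assert (Hc' : cT (true :: m) = length (ext G B s)) by (cbn [cT]; rewrite length_ext; lia).
        pose proof (IHw _ _ _ D2 hx (true :: m) Ex ltac:(lia) Hc' HcF HE) as H'.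
        rewrite W1 in H'.
        rewrite (psubT_ext G t (upt G (ren (posT m))) (ren (posT (true :: m)))) by apply up_posT. exact H'.
Qed.


Lemma posF_rep n k : posF (repeat false n) k = k.
Proof. revert k; induction n; intros k; simpl; auto. destruct k; simpl; auto. Qed.
Lemma cT_rep n : cT (repeat false n) = 0.
Proof. induction n; simpl; auto. Qed.
Lemma cF_rep n : cF (repeat false n) = n.
Proof. induction n; simpl; auto. Qed.
Lemma mg_rep {A} (Y : list A) : mg (repeat false (length Y)) [] Y = Y.
Proof. induction Y; simpl; auto. f_equal; auto. Qed.

Lemma weaken_closed N a C : typ [] N a -> (forall t, In t C -> wf C t) -> typ C N a.
Proof.
  intros HN HC.
  destruct (proj1 (typ_typn_all G arity) _ _ _ HN) as [h Hh].
  destruct (wfn_list_max G arity C C) as [hx Hx].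
  { intros t Ht. apply (proj2 (typ_typn_all G arity)). auto. }
  pose proof (proj1 (W_all (h + hx)) h [] N a Hh hx (repeat false (length C)) C ltac:(lia)
     (cT_rep _) (cF_rep _) Hx) as H.
  pose proof (typ_nil_closed G arity N a HN) as [HcN Hca].
  rewrite cl0_psub in H by auto. rewrite clT0_psub in H by auto.
  unfold MG in H. simpl in H.
  replace (map (psubT (ren (posF (repeat false (length C))))) C) with C in H.
  - now rewrite mg_rep in H.
  - rewrite <- (map_id C) at 1. apply map_ext. intro x. rewrite <- (psubT_id G x) at 1.
    apply psubT_ext. intro k. unfold ren. now rewrite posF_rep.
Qed.

End W.

End P9.
Import P9.

Module P10.

Section LR.
Variable G : Type.
Variable arity : G -> nat.
Variable dagger : G -> G.
Variable meas : tm G -> nat -> nat -> nat -> R.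
Local Notation tm := (tm G).
Local Notation ty := (ty G).
Local Notation psub := (psub G).
Local Notation psubT := (psubT G).
Local Notation typ := (typ G arity).
Local Notation wf := (wf G arity).
Local Notation eval := (eval G arity dagger meas).
Local Notation tsz := (tsz G).

Fixpoint Rs (f : nat) (S : ty) (M : tm) {struct f} : Prop :=
  match f with
  | 0 => False
  | Datatypes.S f =>
    match S with
    | TNat => True
    | TIdx => exists n, eval M 1%R (tNum n)
    | TCirc _ => True
    | TPi a b => forall A a0, typ [] A a0 -> tyconv G a0 a -> Rs f a A ->
                  Rs f (subst_ty G 0 A b) (tApp M A)
    end
  end.

Fixpoint Vs (f : nat) (S : ty) {struct f} : Prop :=
  match f with
  | 0 => False
  | Datatypes.S f =>
    match S with
    | TCirc E => typ [] E TIdx /\ exists n, eval E 1%R (tNum n)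
    | TPi a b => forall A a0, typ [] A a0 -> tyconv G a0 a -> Rs f a A -> Vs f (subst_ty G 0 A b)
    | _ => True
    end
  end.

Definition Red S M := Rs (tsz S) S M.
Definition Vty S := Vs (tsz S) S.

Lemma tsz_subst j A b : tsz (subst_ty G j A b) = tsz b.
Proof. rewrite substT_psub. apply tsz_psub. Qed.

Lemma tsz_pos S : 1 <= tsz S.
Proof. destruct S; simpl; lia. Qed.

Lemma Rs_fuel f : forall f' S M, tsz S <= f -> tsz S <= f' -> (Rs f S M <-> Rs f' S M).
Proof.
  induction f; intros f' S M H1 H2. pose proof (tsz_pos S); lia.
  destruct f'. pose proof (tsz_pos S); lia.
  destruct S; simpl in *; try tauto.
  split; intros H A a0 Ha Hc HR.
  - apply (IHf f'); try rewrite tsz_subst; try lia. apply H with a0; auto.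
    apply (IHf f'); auto; lia.
  - apply (IHf f'); try rewrite tsz_subst; try lia. apply H with a0; auto.
    apply (IHf f'); auto; lia.
Qed.

Lemma Vs_fuel f : forall f' S, tsz S <= f -> tsz S <= f' -> (Vs f S <-> Vs f' S).
Proof.
  induction f; intros f' S H1 H2. pose proof (tsz_pos S); lia.
  destruct f'. pose proof (tsz_pos S); lia.
  destruct S; simpl in *; try tauto.
  split; intros H A a0 Ha Hc HR.
  - apply (IHf f'); try rewrite tsz_subst; try lia. apply H with a0; auto.
    apply (Rs_fuel f' f); auto; lia.
  - apply (IHf f'); try rewrite tsz_subst; try lia. apply H with a0; auto.
    apply (Rs_fuel f f'); auto; lia.
Qed.

Lemma Rs_f f f' S M : tsz S <= f -> tsz S <= f' -> Rs f S M -> Rs f' S M.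
Proof. intros. apply (Rs_fuel f f'); auto. Qed.
Lemma Vs_f f f' S : tsz S <= f -> tsz S <= f' -> Vs f S -> Vs f' S.
Proof. intros. apply (Vs_fuel f f'); auto. Qed.

Lemma Red_pi a b M : Red (TPi a b) M <->
  forall A a0, typ [] A a0 -> tyconv G a0 a -> Red a A -> Red (subst_ty G 0 A b) (tApp M A).
Proof.
  unfold Red. simpl. split; intros H A a0 Ha Hc HR.
  - eapply Rs_f; [|reflexivity|eapply H; eauto]; rewrite ?tsz_subst; try lia.
    eapply Rs_f; [reflexivity| |eauto]; lia.
  - eapply Rs_f; [reflexivity| |eapply H; eauto]; rewrite ?tsz_subst; try lia.
    eapply Rs_f; [| reflexivity |eauto]; lia.
Qed.

Lemma Vty_pi a b : Vty (TPi a b) <->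
  forall A a0, typ [] A a0 -> tyconv G a0 a -> Red a A -> Vty (subst_ty G 0 A b).
Proof.
  unfold Vty, Red. simpl. split; intros H A a0 Ha Hc HR.
  - eapply Vs_f; [|reflexivity|eapply H; eauto]; rewrite ?tsz_subst; try lia.
    eapply Rs_f; [reflexivity| |eauto]; lia.
  - eapply Vs_f; [reflexivity| |eapply H; eauto]; rewrite ?tsz_subst; try lia.
    eapply Rs_f; [| reflexivity |eauto]; lia.
Qed.

Lemma Red_idx M : Red TIdx M <-> exists n, eval M 1%R (tNum n).
Proof. reflexivity. Qed.
Lemma Vty_circ E : Vty (TCirc E) <-> typ [] E TIdx /\ exists n, eval E 1%R (tNum n).
Proof. reflexivity. Qed.
Lemma Red_circ E M : Red (TCirc E) M.
Proof. exact I. Qed.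
Lemma Red_nat M : Red TNat M.
Proof. exact I. Qed.
Lemma Vty_nat : Vty TNat.
Proof. exact I. Qed.
Lemma Vty_idx : Vty TIdx.
Proof. exact I. Qed.

Lemma Red_conv_f f : forall S S' M, tsz S <= f -> tyconv G S S' -> Red S M -> Red S' M.
Proof.
  induction f; intros S S' M Hf Hc HR. pose proof (tsz_pos S); lia.
  destruct S.
  - apply tyconv_shrel in Hc. destruct S'; simpl in Hc; try tauto.
  - apply tyconv_shrel in Hc. destruct S'; simpl in Hc; try tauto.
  - apply tyconv_shrel in Hc. destruct S'; simpl in Hc; try tauto.
  - apply tyconv_pi_inv in Hc. destruct Hc as [a' [b' [-> [Ha Hb]]]].
    rewrite Red_pi in *. intros A a0 HA Hc HRA.
    simpl in Hf.
    apply IHf with (subst_ty G 0 A S2). rewrite tsz_subst; lia.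
    rewrite !substT_psub. now apply tyconv_psub.
    apply HR with a0; auto. eapply cvt_trans; eauto. now apply cvt_sym.
    apply IHf with a'; auto. pose proof (tsz_conv G _ _ Ha). lia. now apply cvt_sym.
Qed.

Lemma Red_conv S S' M : tyconv G S S' -> Red S M -> Red S' M.
Proof. intros. eapply Red_conv_f; eauto. Qed.

Definition apps := apps G.

Lemma Red_exp_f f : forall S X Y, tsz S <= f ->
  (forall Ps a V, eval (apps X Ps) a V -> eval (apps Y Ps) a V) -> Red S X -> Red S Y.
Proof.
  induction f; intros S X Y Hf HXY HR. pose proof (tsz_pos S); lia.
  destruct S; auto.
  - rewrite Red_idx in *. destruct HR as [n Hn]. exists n. apply (HXY []). exact Hn.
  - rewrite Red_pi in *. intros A a0 HA Hc HRA. simpl in Hf.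
    apply IHf with (tApp X A). rewrite tsz_subst; lia.
    intros Ps a V. apply (HXY (A :: Ps)).
    eapply HR; eauto.
Qed.

Lemma Red_exp S X Y : (forall Ps a V, eval (apps X Ps) a V -> eval (apps Y Ps) a V) -> Red S X -> Red S Y.
Proof. intros. eapply Red_exp_f; eauto. Qed.

Lemma Red_noleaf_f f : forall S M, tsz S <= f -> ~ leafIdx G S -> Red S M.
Proof.
  induction f; intros S M Hf HL. pose proof (tsz_pos S); lia.
  destruct S; simpl in HL; try tauto; try exact I.
  rewrite Red_pi. intros. simpl in Hf. apply IHf. rewrite tsz_subst; lia.
  rewrite substT_psub, leafIdx_psub. auto.
Qed.
Lemma Red_noleaf S M : ~ leafIdx G S -> Red S M.
Proof. intros. eapply Red_noleaf_f; eauto. Qed.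

Lemma Vty_arrow a b : Vty b -> Vty (arrow G a b).
Proof.
  intro H. unfold arrow. rewrite Vty_pi. intros. now rewrite substT_lift_cancel.
Qed.

End LR.

End P10.
Import P10.

Module P11.

Section Env.
Variable G : Type.
Variable arity : G -> nat.
Variable dagger : G -> G.
Variable meas : tm G -> nat -> nat -> nat -> R.
Local Notation tm := (tm G).
Local Notation ty := (ty G).
Local Notation psub := (psub G).
Local Notation psubT := (psubT G).
Local Notation typ := (typ G arity).
Local Notation wf := (wf G arity).
Local Notation eval := (eval G arity dagger meas).
Local Notation Red := (Red G arity dagger meas).
Local Notation Vty := (Vty G arity dagger meas).
Local Notation ftau := (ftau G).

Definition msub (sg : list tm) := psubT (ftau (map Some sg)).
Definition msubt (sg : list tm) := psub (ftau (map Some sg)).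
Definition dd : tm := tNum 0.

Definition env (B : list ty) (sg : list tm) : Prop :=
  length sg = length B /\
  forall i, i < length B ->
    cl G 0 (nth i sg dd) /\
    (exists a0, typ [] (nth i sg dd) a0 /\ tyconv G a0 (msub sg (nth i B TNat))) /\
    Red (msub sg (nth i B TNat)) (nth i sg dd).

Lemma E1 sg i : i < length sg -> ftau (map Some sg) i = nth i sg dd.
Proof.
  revert i; induction sg as [|x sg IH]; intros i H; simpl in *; try lia.
  destruct i; auto. apply IH. lia.
Qed.

Lemma E2 A sg x : msub (A :: sg) (lift_ty G 1 0 x) = msub sg x.
Proof. unfold msub. apply (psubT_F3 G [] (map Some sg) A x). Qed.

Lemma E3_pt A tau k : cl G 0 A ->
  subst_tm G 0 A (upt G (ftau tau) k) = ftau (Some A :: tau) k.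
Proof.
  intro HA. destruct k; simpl.
  - rewrite lift0. reflexivity.
  - apply subst_lift_cancel.
Qed.
Lemma E3 A tau X : cl G 0 A -> subst_tm G 0 A (psub (upt G (ftau tau)) X) = psub (ftau (Some A :: tau)) X.
Proof.
  intro HA. rewrite subst_psub, sub_sub. apply psub_ext. intro k.
  rewrite <- subst_psub. now apply E3_pt.
Qed.
Lemma E3T A tau X : cl G 0 A -> subst_ty G 0 A (psubT (upt G (ftau tau)) X) = psubT (ftau (Some A :: tau)) X.
Proof.
  intro HA. rewrite substT_psub, subT_sub. apply psubT_ext. intro k.
  rewrite <- subst_psub. now apply E3_pt.
Qed.

Lemma E4 X : msub [] X = X.
Proof. apply psubT_id. Qed.
Lemma E4t X : msubt [] X = X.
Proof. apply psub_id. Qed.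

Lemma E5 sg1 N sg2 x : msub (sg1 ++ N :: sg2) (lift_ty G 1 (length sg1) x) = msub (sg1 ++ sg2) x.
Proof.
  unfold msub. rewrite !map_app. simpl.
  rewrite <- (length_map Some sg1). apply psubT_F3.
Qed.

Lemma nth_ins_i i (u : ty) B0 d : i <= length B0 -> nth i (ins G i u B0) d = lift_ty G 1 i u.
Proof.
  intro H. rewrite nth_indep with (d' := lift_ty G 1 i d) by (rewrite length_ins; lia).
  unfold ins. rewrite map_nth. f_equal.
  assert (Hl : length (firstn i B0) = i) by (rewrite length_firstn; lia).
  rewrite <- Hl at 1. apply nth_middle.
Qed.

Lemma nth_ins_j i j (u : ty) B0 d : i <= length B0 -> j < length B0 ->
  nth (liftidx i j) (ins G i u B0) d = lift_ty G 1 i (nth j B0 d).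
Proof.
  intros H Hj. assert (Hlj : liftidx i j < S (length B0)) by (unfold liftidx; destruct (Nat.leb_spec i j); lia).
  rewrite nth_indep with (d' := lift_ty G 1 i d) by (rewrite length_ins; lia).
  unfold ins. rewrite map_nth. f_equal.
  assert (Hl : length (firstn i B0) = i) by (rewrite length_firstn; lia).
  unfold liftidx. destruct (Nat.leb_spec i j).
  - rewrite app_nth2 by lia. rewrite Hl. replace (j + 1 - i) with (S (j - i)) by lia. simpl.
    rewrite nth_skipn. f_equal. lia.
  - rewrite app_nth1 by lia. rewrite nth_firstn. destruct (Nat.ltb_spec j i); auto; lia.
Qed.

Lemma nth_rem_j {A} (l1 l2 : list A) x j d :
  nth (liftidx (length l1) j) (l1 ++ x :: l2) d = nth j (l1 ++ l2) d.
Proof.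
  unfold liftidx. destruct (Nat.leb_spec (length l1) j).
  - rewrite !app_nth2 by lia. replace (j + 1 - length l1) with (S (j - length l1)) by lia. reflexivity.
  - rewrite !app_nth1 by lia. reflexivity.
Qed.

Lemma env_rem i u B0 sg : i <= length B0 -> env (ins G i u B0) sg ->
  exists sg1 N sg2, sg = sg1 ++ N :: sg2 /\ length sg1 = i /\ env B0 (sg1 ++ sg2).
Proof.
  intros Hi [Hl He]. rewrite length_ins in Hl.
  destruct (split_at sg i ltac:(lia)) as [s1 [N [s2 [-> Hs1]]]].
  exists s1, N, s2. split; auto. split; auto.
  split. rewrite length_app in *. simpl in Hl. lia.
  intros j Hj. specialize (He (liftidx i j)).
  rewrite nth_ins_j in He by auto. subst i. rewrite E5 in He. rewrite nth_rem_j in He.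
  apply He. rewrite length_ins. unfold liftidx. destruct (Nat.leb_spec (length s1) j); lia.
Qed.

Lemma env_ext B sg s A a0 : env B sg -> cl G 0 A -> typ [] A a0 -> tyconv G a0 (msub sg s) ->
  Red (msub sg s) A -> env (ext G B s) (A :: sg).
Proof.
  intros [Hl He] HA Ha Hc HR. split. rewrite length_ext. simpl; lia.
  intros [|i] Hi.
  - unfold ext, ins. simpl nth. rewrite E2. simpl. eauto.
  - rewrite length_ext in Hi. unfold ext, ins. simpl nth.
    rewrite nth_indep with (d' := lift_ty G 1 0 TNat) by (rewrite length_map; lia).
    rewrite map_nth. rewrite E2. apply He. lia.
Qed.

Lemma sel_allSome (sg : list tm) B : sel G (map Some sg) B = [].
Proof. revert B; induction sg; intros [|x B]; simpl; auto. Qed.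

Lemma condF_allSome f (sg : list tm) B : length sg = length B ->
  (forall i, i < length B -> cl G 0 (nth i sg dd) /\
     exists a0, typ [] (nth i sg dd) a0 /\ tyconv G a0 (psubT f (nth i B TNat))) ->
  condF G arity f (map Some sg) B.
Proof.
  revert B; induction sg as [|x sg IH]; intros [|y B] Hl H; simpl in *; try lia; auto.
  split. apply (H 0). lia.
  apply IH. lia. intros i Hi. apply (H (S i)). lia.
Qed.

Lemma env_cond B sg : env B sg -> cond G arity (map Some sg) B.
Proof.
  intros [Hl He]. split. rewrite length_map; auto.
  apply condF_allSome; auto. intros i Hi. destruct (He i Hi) as [H1 [H2 _]]. auto.
Qed.

Lemma TS_all B sg : env B sg ->
  (forall M s, typ B M s -> typ [] (msubt sg M) (msub sg s)) /\
  (forall s, wf B s -> wf [] (msub sg s)).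
Proof.
  intros He. pose proof (env_cond B sg He) as Hc.
  assert (Hsb : sb G (map Some sg) B = []) by (unfold sb; now rewrite sel_allSome).
  split; intros.
  - rewrite <- Hsb. eapply (proj1 (TSP_all G arity (weaken_closed G arity))); eauto.
  - rewrite <- Hsb. eapply (proj2 (TSP_all G arity (weaken_closed G arity))); eauto.
Qed.

End Env.

End P11.
Import P11.

Module P12.

Section FL.
Variable G : Type.
Variable arity : G -> nat.
Variable dagger : G -> G.
Variable meas : tm G -> nat -> nat -> nat -> R.
Local Notation tm := (tm G).
Local Notation ty := (ty G).
Local Notation psub := (psub G).
Local Notation psubT := (psubT G).
Local Notation typ := (typ G arity).
Local Notation wf := (wf G arity).
Local Notation eval := (eval G arity dagger meas).
Local Notation Red := (Red G arity dagger meas).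
Local Notation Vty := (Vty G arity dagger meas).
Local Notation ftau := (ftau G).
Local Notation env := (env G arity dagger meas).
Local Notation msub := (msub G).
Local Notation msubt := (msubt G).
Local Notation arrow := (arrow G).

Definition FP B M s := forall sg, env B sg -> Red (msub sg s) (msubt sg M) /\ Vty (msub sg s).
Definition FW B s := forall sg, env B sg -> Vty (msub sg s).

Lemma msub_arrow sg a b : msub sg (arrow a b) = arrow (msub sg a) (msub sg b).
Proof. apply psub_arrow. Qed.

Lemma TSt B sg M s : env B sg -> typ B M s -> typ [] (msubt sg M) (msub sg s).
Proof. intros He H. eapply (TS_all G arity dagger meas); eauto. Qed.
Lemma TSw B sg s : env B sg -> wf B s -> wf [] (msub sg s).
Proof. intros He H. eapply (TS_all G arity dagger meas); eauto. Qed.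

Lemma circE B E sg : typ B E TIdx -> FP B E TIdx -> env B sg -> Vty (TCirc (msubt sg E)).
Proof.
  intros Ht HF He. apply Vty_circ. split.
  - apply (TSt B sg E TIdx He Ht).
  - apply (HF sg He).
Qed.

Lemma c_var B i s : i <= length B -> FW B s -> FP (ins G i s B) (tVar i) (lift_ty G 1 i s).
Proof.
  intros Hi HW sg He.
  pose proof He as [Hl Hn]. rewrite length_ins in Hl.
  unfold msubt. cbn [P1.psub]. rewrite P11.E1 by lia.
  assert (Hi' : i < length (ins G i s B)) by (rewrite length_ins; lia).
  destruct (Hn i Hi') as [_ [_ HR]].
  rewrite nth_ins_i in HR by auto. split; auto.
  destruct (env_rem G arity dagger meas i s B sg Hi He) as [s1 [N [s2 [-> [Hs1 He']]]]].
  subst i. rewrite E5. apply HW; auto.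
Qed.

Lemma c_lam B s N t : FP (ext G B s) N t -> FP B (tLam s N) (TPi s t).
Proof.
  intros HF sg He. unfold msub, msubt. cbn [P1.psub P1.psubT]. split.
  - apply Red_pi. intros A a0 Ha Hc HR.
    pose proof (typ_nil_closed G arity _ _ Ha) as [HA _].
    rewrite E3T by auto.
    assert (He' : env (ext G B s) (A :: sg)) by (eapply env_ext; eauto).
    destruct (HF _ He') as [H1 _].
    eapply Red_exp; [|exact H1].
    intros Ps a V Hev. apply E_beta. unfold msubt in Hev. simpl map in Hev. rewrite E3; auto.
  - apply Vty_pi. intros A a0 Ha Hc HR.
    pose proof (typ_nil_closed G arity _ _ Ha) as [HA _].
    rewrite E3T by auto.
    assert (He' : env (ext G B s) (A :: sg)) by (eapply env_ext; eauto).
    destruct (HF _ He') as [_ H2]. exact H2.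
Qed.

Lemma c_app B P Q s t : FP B P (TPi s t) -> FP B Q s -> typ B Q s -> FP B (tApp P Q) (subst_ty G 0 Q t).
Proof.
  intros HP HQ HtQ sg He.
  destruct (HP sg He) as [R1 V1]. destruct (HQ sg He) as [R2 V2].
  pose proof (TSt B sg Q s He HtQ) as HT.
  unfold msub, msubt in *. cbn [P1.psub P1.psubT] in *. rewrite psubT_subst0.
  split.
  - rewrite Red_pi in R1. apply R1 with (psubT (ftau (map Some sg)) s); auto. apply cvt_refl.
  - rewrite Vty_pi in V1. apply V1 with (psubT (ftau (map Some sg)) s); auto. apply cvt_refl.
Qed.

Lemma c_noleaf B M s : FW B s -> ~ leafIdx G s -> FP B M s.
Proof.
  intros HW HL sg He. split; auto. apply Red_noleaf. unfold msub. now rewrite leafIdx_psub.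
Qed.

Lemma leaf_arrow a b : leafIdx G (arrow a b) <-> leafIdx G b.
Proof. unfold arrow. simpl. rewrite lift1T_ren. apply leafIdx_psub. Qed.

Ltac arrtac := repeat first [ rewrite msub_arrow | apply Vty_arrow ].

Lemma msub_idx sg : msub sg TIdx = TIdx. Proof. reflexivity. Qed.
Lemma msub_nat sg : msub sg TNat = TNat. Proof. reflexivity. Qed.
Lemma msub_circ sg E : msub sg (TCirc E) = TCirc (msubt sg E). Proof. reflexivity. Qed.

Lemma one_one : (1 * 1)%R = 1%R.
Proof. apply Rmult_1_l. Qed.

Lemma typ_num0 n : typ [] (tNum n) TIdx.
Proof. apply T_num. intros t []. Qed.

Lemma c_num B n : FP B (tNum n) TIdx.
Proof. intros sg He. split. exists n. apply E_num. exact I. Qed.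

Lemma c_gate B g : FP B (tGate g) (TCirc (tNum (arity g))).
Proof.
  intros sg He. split. exact I. apply Vty_circ. split. apply typ_num0. eexists; apply E_num.
Qed.

Lemma c_natarrows B M s : (forall sg, Vty (msub sg s)) -> ~ leafIdx G s -> FP B M s.
Proof. intros HV HL. apply c_noleaf; auto. intros sg _. auto. Qed.

Lemma c_ifc B E : typ B E TIdx -> FP B E TIdx ->
  FP B tIf (arrow TNat (arrow (TCirc E) (arrow (TCirc E) (TCirc E)))).
Proof.
  intros Ht HF. apply c_noleaf.
  - intros sg He. rewrite !msub_arrow. repeat apply Vty_arrow. rewrite msub_circ. eapply circE; eauto.
  - rewrite !leaf_arrow. simpl. tauto.
Qed.

Lemma c_Y B s s' : FW B s -> tyconv G s s' -> yshape G s' -> FP B (tY s) (arrow (arrow s s) s).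
Proof.
  intros HW Hc Hy. apply c_noleaf.
  - intros sg He. rewrite !msub_arrow. apply Vty_arrow. auto.
  - rewrite leaf_arrow. rewrite (leafIdx_conv G _ _ Hc). now apply yshape_noleaf.
Qed.

Lemma c_idx B M : FP B M TNat.
Proof. intros sg He. split; exact I. Qed.

Lemma c_plus B a b : FP B a TIdx -> FP B b TIdx -> FP B (tPlus a b) TIdx.
Proof.
  intros Ha Hb sg He. split; [|exact I].
  destruct (Ha sg He) as [[n1 H1] _]. destruct (Hb sg He) as [[n2 H2] _].
  exists (n1 + n2). unfold msubt. cbn [P1.psub]. rewrite <- one_one. apply E_plus; auto.
Qed.
Lemma c_mult B a b : FP B a TIdx -> FP B b TIdx -> FP B (tMult a b) TIdx.
Proof.
  intros Ha Hb sg He. split; [|exact I].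
  destruct (Ha sg He) as [[n1 H1] _]. destruct (Hb sg He) as [[n2 H2] _].
  exists (n1 * n2). unfold msubt. cbn [P1.psub]. rewrite <- one_one. apply E_mult; auto.
Qed.

Lemma c_size B M E : typ B M (TCirc E) -> FP B M (TCirc E) -> FP B (tApp tSize M) TIdx.
Proof.
  intros Ht HF sg He. split; [|exact I].
  destruct (HF sg He) as [_ HV]. rewrite msub_circ in HV. apply Vty_circ in HV.
  destruct HV as [_ [n Hn]]. exists n. unfold msubt. cbn [P1.psub].
  eapply E_size; eauto. apply (TSt B sg M (TCirc E) He Ht).
Qed.

Lemma c_cons B E : typ B E TIdx -> FP B E TIdx ->
  FP B tCons (arrow (TCirc E) (arrow (TCirc E) (TCirc E))).
Proof.
  intros Ht HF. apply c_noleaf.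
  - intros sg He. rewrite !msub_arrow. repeat apply Vty_arrow. rewrite msub_circ. eapply circE; eauto.
  - rewrite !leaf_arrow. simpl. tauto.
Qed.
Lemma c_rev B E : typ B E TIdx -> FP B E TIdx -> FP B tRev (arrow (TCirc E) (TCirc E)).
Proof.
  intros Ht HF. apply c_noleaf.
  - intros sg He. rewrite !msub_arrow. repeat apply Vty_arrow. rewrite msub_circ. eapply circE; eauto.
  - rewrite !leaf_arrow. simpl. tauto.
Qed.
Lemma c_dmeas B E : FP B tDMeas (arrow TNat (arrow (TCirc E) TNat)).
Proof.
  apply c_noleaf.
  - intros sg He. rewrite !msub_arrow. repeat apply Vty_arrow. exact I.
  - rewrite !leaf_arrow. simpl. tauto.
Qed.

Lemma c_par B E0 E1 : typ B E0 TIdx -> FP B E0 TIdx -> typ B E1 TIdx -> FP B E1 TIdx ->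
  FP B tPar (arrow (TCirc E0) (arrow (TCirc E1) (TCirc (tPlus (tPlus E0 E1) (tNum 1))))).
Proof.
  intros Ht0 HF0 Ht1 HF1. apply c_noleaf.
  - intros sg He. rewrite !msub_arrow. repeat apply Vty_arrow. rewrite msub_circ.
    pose proof (circE _ _ _ Ht0 HF0 He) as V0. pose proof (circE _ _ _ Ht1 HF1 He) as V1.
    apply Vty_circ in V0, V1. destruct V0 as [T0 [n0 N0]]. destruct V1 as [T1 [n1 N1]].
    apply Vty_circ. unfold msubt in *. cbn [P1.psub]. split.
    + apply T_plus; [apply T_plus|apply typ_num0]; auto.
    + exists (n0 + n1 + 1). rewrite <- one_one. apply E_plus; [|apply E_num].
      rewrite <- one_one. apply E_plus; auto.
  - rewrite !leaf_arrow. simpl. tauto.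
Qed.

Lemma c_iter B E0 E1 : typ B E0 TIdx -> FP B E0 TIdx -> typ B E1 TIdx -> FP B E1 TIdx ->
  FP B tIter
      (TPi TIdx (arrow (TCirc (lift_tm G 1 0 E0))
                   (arrow (TCirc (lift_tm G 1 0 E1))
                      (TCirc (tPlus (lift_tm G 1 0 E0)
                                (tMult (tPlus (tNum 1) (lift_tm G 1 0 E1)) (tVar 0))))))).
Proof.
  intros Ht0 HF0 Ht1 HF1. apply c_noleaf.
  - intros sg He. unfold msub. cbn [P1.psubT]. apply Vty_pi. intros A a0 HA Hc HR.
    pose proof (typ_nil_closed G arity _ _ HA) as [HAc _].
    rewrite E3T by auto. rewrite !psub_arrow. repeat apply Vty_arrow.
    cbn [P1.psubT P1.psub].
    change (lift_tm G 1 0 E0) with (lift_tm G 1 (length (@nil (option tm))) E0).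
    change (lift_tm G 1 0 E1) with (lift_tm G 1 (length (@nil (option tm))) E1).
    rewrite !(psub_F3 G [] (map Some sg) A). simpl app.
    pose proof (circE _ _ _ Ht0 HF0 He) as V0. pose proof (circE _ _ _ Ht1 HF1 He) as V1.
    apply Vty_circ in V0, V1. destruct V0 as [T0 [n0 N0]]. destruct V1 as [T1 [n1 N1]].
    unfold msubt in *.
    apply tyconv_idx_inv in Hc. subst a0. destruct HR as [k Hk].
    apply Vty_circ. split.
    + apply T_plus; auto. apply T_mult; auto. apply T_plus; auto. apply typ_num0.
    + eexists. rewrite <- one_one. apply E_plus; eauto.
      rewrite <- one_one. apply E_mult; eauto.
      rewrite <- one_one. apply E_plus; eauto. apply E_num.
  - cbn [leafIdx]. rewrite !leaf_arrow. simpl. tauto.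
Qed.

Lemma c_conv B M s t : FP B M s -> tyconv G s t -> FW B t -> FP B M t.
Proof.
  intros HF Hc HW sg He. split; auto. destruct (HF sg He) as [HR _].
  eapply Red_conv; eauto. now apply tyconv_psub.
Qed.

Lemma w_circ B E : typ B E TIdx -> FP B E TIdx -> FW B (TCirc E).
Proof. intros Ht HF sg He. rewrite msub_circ. eapply circE; eauto. Qed.

Lemma w_pi B s t : FW B s -> FW (ext G B s) t -> FW B (TPi s t).
Proof.
  intros H1 H2 sg He. unfold msub. cbn [P1.psubT]. apply Vty_pi. intros A a0 HA Hc HR.
  pose proof (typ_nil_closed G arity _ _ HA) as [HAc _].
  rewrite E3T by auto. apply (H2 (A :: sg)). eapply env_ext; eauto.
Qed.

Lemma FL_all : (forall B M s, typ B M s -> FP B M s) /\ (forall B s, wf B s -> FW B s).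
Proof.
  split; [apply (typ_mut G arity FP FW) | apply (wf_mut G arity FP FW)]; intros.
  all: first
    [ solve [eapply c_var; eauto]
    | solve [eapply c_lam; eauto]
    | solve [eapply c_app; eauto]
    | solve [eapply c_num; eauto]
    | solve [eapply c_gate; eauto]
    | solve [eapply c_ifc; eauto]
    | solve [eapply c_Y; eauto]
    | solve [eapply c_idx; eauto]
    | solve [eapply c_plus; eauto]
    | solve [eapply c_mult; eauto]
    | solve [eapply c_size; eauto]
    | solve [eapply c_cons; eauto]
    | solve [eapply c_rev; eauto]
    | solve [eapply c_dmeas; eauto]
    | solve [eapply c_par; eauto]
    | solve [eapply c_iter; eauto]
    | solve [eapply w_circ; eauto]
    | solve [eapply w_pi; eauto]
    | solve [intros sg He; exact I]
    | solve [apply c_noleaf; [intros sg He; rewrite !msub_arrow; repeat apply Vty_arrow; exact I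
                       | rewrite !leaf_arrow; simpl; tauto]]
    | solve [eapply c_conv; eauto] ].
Qed.

End FL.

End P12.
Import P12.

Module P13.

Section Fin.
Variable G : Type.
Variable arity : G -> nat.
Variable dagger : G -> G.
Variable meas : tm G -> nat -> nat -> nat -> R.
Local Notation tm := (tm G).
Local Notation ty := (ty G).
Local Notation psub := (psub G).
Local Notation psubT := (psubT G).
Local Notation typ := (typ G arity).
Local Notation wf := (wf G arity).
Local Notation eval := (eval G arity dagger meas).
Local Notation Red := (Red G arity dagger meas).
Local Notation Vty := (Vty G arity dagger meas).
Local Notation ftau := (ftau G).
Local Notation env := (env G arity dagger meas).
Local Notation msub := (msub G).
Local Notation msubt := (msubt G).

Lemma FL0 M S : typ [] M S -> Red S M /\ Vty S.
Proof.
  intro H. pose proof (proj1 (FL_all G arity dagger meas) [] M S H []) as HF.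
  rewrite E4, E4t in HF. apply HF. split; auto. simpl. intros; lia.
Qed.

Lemma FIN f : forall S M, tsz G S <= f -> typ [] M S -> compc G arity dagger meas f S M.
Proof.
  induction f; intros S M Hf Ht. pose proof (tsz_pos G S); lia.
  simpl. split; auto. destruct S.
  - exact I.
  - apply (FL0 M TIdx Ht).
  - destruct f; simpl in Hf; try lia. simpl.
    pose proof (proj2 (FL0 M _ Ht)) as HV. apply Vty_circ in HV. exact HV.
  - intros N HN. destruct f. destruct HN. destruct HN as [HN _].
    apply IHf. rewrite tsz_subst. simpl in Hf. lia.
    eapply T_app; eauto.
Qed.

Lemma ftau_allNone r k : ftau (repeat None r) k = tVar k.
Proof.
  revert k; induction r; intros k; simpl; auto.
  destruct k; simpl; auto. rewrite IHr. simpl. f_equal. lia.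
Qed.

Lemma ftau_single N i r k : cl G 0 N ->
  ftau (repeat None i ++ Some N :: repeat None r) k = substf G i N k.
Proof.
  intro HN. revert k; induction i; intros k.
  - simpl. destruct k; unfold substf; simpl. now rewrite lift0.
    rewrite ftau_allNone. f_equal. lia.
  - simpl. rewrite <- up_substf. apply up_ext. auto.
Qed.

Lemma condF_allNone f r (X : list ty) : condF G arity f (repeat None r) X.
Proof. revert X; induction r; intros [|x X]; simpl; auto. Qed.

Lemma sel_allNone r (X : list ty) : length X = r -> sel G (repeat None r) X = X.
Proof. revert X; induction r; intros [|x X] H; simpl in *; try lia; auto. f_equal. auto. Qed.

Lemma single_sub B M s i N : typ B M s -> i < length B -> typ [] N (nth i B TNat) ->
  typ (map (subst_ty G i N) (remove_at G i B)) (subst_tm G i N M) (subst_ty G i N s).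
Proof.
  intros Ht Hi HN.
  pose proof (typ_nil_closed G arity _ _ HN) as [HNc Hxc].
  set (r := length B - S i).
  set (tau := repeat None i ++ Some N :: repeat None r).
  set (F := firstn i B). set (S0 := skipn (S i) B). set (x := nth i B TNat).
  assert (HF : length F = i) by (unfold F; rewrite length_firstn; lia).
  assert (HS : length S0 = r) by (unfold S0, r; rewrite length_skipn; lia).
  assert (HB : B = F ++ x :: S0).
  { unfold F, S0, x. clear - Hi. revert B Hi; induction i; intros [|y B] Hi; simpl in *; try lia; auto.
    f_equal. apply IHi. lia. }
  assert (Hpt : forall k, ftau tau k = substf G i N k) by (intro; apply ftau_single; auto).
  assert (Hc : cond G arity tau B).
  { split. unfold tau. rewrite length_app, repeat_length. simpl. rewrite repeat_length. unfold r. lia.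
    rewrite HB. unfold tau. apply condF_app. rewrite repeat_length; auto.
    split. apply condF_allNone. simpl. split; [|apply condF_allNone]. split; auto.
    exists x. split; auto. fold x in HN. rewrite clT0_psub by auto. apply cvt_refl. }
  pose proof (proj1 (TSP_all G arity (weaken_closed G arity)) _ _ _ Ht tau Hc) as H.
  replace (psub (ftau tau) M) with (subst_tm G i N M) in H
    by (rewrite subst_psub; apply psub_ext; intro; auto).
  replace (psubT (ftau tau) s) with (subst_ty G i N s) in H
    by (rewrite substT_psub; apply psubT_ext; intro; auto).
  replace (sb G tau B) with (map (subst_ty G i N) (remove_at G i B)) in H; auto.
  unfold sb, remove_at. fold F S0. rewrite HB. unfold tau. rewrite sel_app by (rewrite repeat_length; auto).
  simpl. rewrite !sel_allNone by auto. apply map_ext. intro y. rewrite substT_psub. apply psubT_ext.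
  intro; auto.
Qed.

Lemma main_comp n : forall B M s, length B = n -> typ B M s -> comp_aux G arity dagger meas n B M s.
Proof.
  induction n; intros B M s Hl Ht; simpl.
  - destruct B; simpl in Hl; try lia. split; auto. unfold CompClosed.
    pose proof (tsize_eq G s). apply (FIN (tsize G s) s M); [lia | auto].
  - split; auto. intros i Hi N HN.
    unfold CompClosed in HN. rewrite tsize_eq in HN.
    destruct (tsz G (nth i B TNat)) eqn:E. pose proof (tsz_pos G (nth i B TNat)); lia.
    destruct HN as [HN _].
    apply IHn.
    + rewrite length_map. unfold remove_at. rewrite length_app, length_firstn, length_skipn. lia.
    + apply single_sub; auto.
Qed.

End Fin.


End P13.
Import P13.

Theorem theorem1 :
  forall (G : Type) (arity : G -> nat) (dagger : G -> G),
    (forall g, arity (dagger g) = arity g) ->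
  forall (meas : tm G -> nat -> nat -> nat -> R)
         (B : list (ty G)) (M : tm G) (kappa : ty G),
    typ G arity B M kappa -> Comp G arity dagger meas B M kappa.
Proof.
  intros G arity dagger _ meas B M kappa H. unfold Comp. eapply main_comp; eauto.
Qed.
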